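(* Let $\mathbf a_0\in(0,\infty)^n$ lie in the interior of the domain of $\Phi$. The Frame condition (FC) holds at $\mathbf a_0$ if and only if $\Gamma_{ij}(\mathbf a_0)=0$ for all $i\neq j$ and the ratio $\tilde g_i(\mathbf a_0)/\Gamma_{ii}(\mathbf a_0)$ does not depend on $i\in\{1,\dots,n\}$ (its common value then being $\lambda(\mathbf a_0)$).
   Context: Multi-species zero-range setting: rates $g_1,\dots,g_n$ on $\mathbb Z_+^n$ satisfying the compatibility condition (INV) $g_i(\mathbf k)/g_i(\mathbf k-e_j)=g_j(\mathbf k)/g_j(\mathbf k-e_i)$ ($i\ne j$, $k^i,k^j>0$), so that product invariant measures $\nu_{\mathbf a}$ indexed by density $\mathbf a$ exist (one-site marginal proportional to $\boldsymbol\varphi^{\mathbf k}/\mathbf g!(\mathbf k)$ with fugacity $\boldsymbol\varphi=\Phi(\mathbf a)$). $\tilde g_i(\mathbf a)=E_{\nu_{\mathbf a}}[g_i(\boldsymbol\alpha(0))]$ and $\Gamma(\mathbf a)$ is the covariance matrix of $\boldsymbol\alpha(0)$ under $\nu_{\mathbf a}$. Frame condition (FC) at $\mathbf a_0$: there is $\lambda=\lambda(\mathbf a_0)$ with $\partial_{a^i}\tilde g_i(\mathbf a_0)=\lambda$ for every $i$ and $\partial_{a^j}\tilde g_i(\mathbf a_0)=0$ for all $i\ne j$. *)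

(* Defs.v *)
From Stdlib Require Import Reals Lra List ClassicalEpsilon.
Open Scope R_scope.

(* One-site configurations of n species: k : nat -> nat with k i = 0 for i >= n
   (species are indexed 0..n-1). *)
Definition cfg (n : nat) (k : nat -> nat) : Prop :=
  forall i, (n <= i)%nat -> k i = 0%nat.

Definition dec (k : nat -> nat) (j : nat) : nat -> nat :=
  fun i => if Nat.eqb i j then (k i - 1)%nat else k i.

Definition upd (a : nat -> R) (j : nat) (t : R) : nat -> R :=
  fun i => if Nat.eqb i j then t else a i.

Definition lsum {T : Type} (f : T -> R) (l : list T) : R :=
  fold_right (fun x acc => f x + acc) 0 l.

(* Unordered sum over Z_+^n of a NONNEGATIVE family: the supremum of all
   finite partial sums. *)
Definition HasSum (n : nat) (f : (nat -> nat) -> R) (s : R) : Prop :=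
  is_lub (fun x => exists l, NoDup l /\ Forall (cfg n) l /\ x = lsum f l) s.

Definition tsum (n : nat) (f : (nat -> nat) -> R) : R :=
  epsilon (inhabits 0) (fun s => HasSum n f s).

Fixpoint prodR (m : nat) (f : nat -> R) : R :=
  match m with O => 1 | S m' => prodR m' f * f m' end.

Definition prefix (k : nat -> nat) (j m : nat) : nat -> nat :=
  fun i => if Nat.ltb i j then k i else if Nat.eqb i j then m else 0%nat.

(* g!(k): product of the rates along the path filling species 0, then 1, ...;
   under (INV) it is path independent and g!(k)/g!(k-e_i) = g_i(k). *)
Definition gfact (g : nat -> (nat -> nat) -> R) (n : nat) (k : nat -> nat) : R :=
  prodR n (fun j => prodR (k j) (fun m => g j (prefix k j (S m)))).

Definition weight g n (phi : nat -> R) (k : nat -> nat) : R :=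
  prodR n (fun j => phi j ^ k j) / gfact g n k.

Definition Zpart g n phi : R := tsum n (weight g n phi).
Definition expect g n phi (F : (nat -> nat) -> R) : R :=
  tsum n (fun k => F k * weight g n phi k) / Zpart g n phi.

Definition in_fug_domain g n (phi : nat -> R) : Prop :=
  (forall i, (i < n)%nat -> 0 < phi i) /\
  exists eps, 0 < eps /\ forall psi : nat -> R,
    (forall i, (i < n)%nat -> 0 < psi i /\ Rabs (psi i - phi i) < eps) ->
    exists s, HasSum n (weight g n psi) s.

Definition density g n phi (i : nat) : R := expect g n phi (fun k => INR (k i)).

Definition zr_rates (g : nat -> (nat -> nat) -> R) (n : nat) : Prop :=
  forall i k, (i < n)%nat -> cfg n k ->
    (k i = 0%nat -> g i k = 0) /\ ((0 < k i)%nat -> 0 < g i k).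

Definition INV (g : nat -> (nat -> nat) -> R) (n : nat) : Prop :=
  forall i j k, (i < n)%nat -> (j < n)%nat -> i <> j -> cfg n k ->
    (0 < k i)%nat -> (0 < k j)%nat ->
    g i k / g i (dec k j) = g j k / g j (dec k i).

(* Phi is the inverse of the density map on a neighbourhood of a0, i.e.
   a0 lies in the interior of the domain of Phi. *)
Definition fugacity_map_near g n (Phi : (nat -> R) -> (nat -> R)) (a0 : nat -> R) : Prop :=
  exists eps, 0 < eps /\ forall a : nat -> R,
    (forall i, (i < n)%nat -> Rabs (a i - a0 i) < eps) ->
    in_fug_domain g n (Phi a) /\
    forall i, (i < n)%nat -> density g n (Phi a) i = a i.

Definition gtilde g n Phi (i : nat) (a : nat -> R) : R := expect g n (Phi a) (g i).
Definition Gamma g n Phi (i j : nat) (a : nat -> R) : R :=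
  expect g n (Phi a) (fun k => INR (k i) * INR (k j))
  - expect g n (Phi a) (fun k => INR (k i)) * expect g n (Phi a) (fun k => INR (k j)).

Definition FC_with g n Phi (a0 : nat -> R) (lam : R) : Prop :=
  forall i j, (i < n)%nat -> (j < n)%nat ->
    derivable_pt_lim (fun t => gtilde g n Phi i (upd a0 j t)) (a0 j)
      (if Nat.eqb i j then lam else 0).

Definition FC g n Phi a0 : Prop := exists lam, FC_with g n Phi a0 lam.

(* Main.v *)
Require Import Defs.
From Stdlib Require Import Reals Lra List ClassicalEpsilon Psatz FunctionalExtensionality PropExtensionality Lia.
Open Scope R_scope.

Definition cdec {A : Type} : forall x y : A, {x = y} + {x <> y} :=
  fun x y => excluded_middle_informative (x = y).

Lemma lsum_app {T} (f : T -> R) l1 l2 : lsum f (l1 ++ l2) = lsum f l1 + lsum f l2.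
Proof. induction l1; simpl; [lra|rewrite IHl1; lra]. Qed.

Lemma lsum_nonneg {T} (f : T -> R) l : (forall x, In x l -> 0 <= f x) -> 0 <= lsum f l.
Proof. induction l; simpl; intros H; [lra|].
 assert (0 <= f a) by auto. assert (0 <= lsum f l) by auto. lra. Qed.

Lemma lsum_ext {T} (f g : T -> R) l : (forall x, In x l -> f x = g x) -> lsum f l = lsum g l.
Proof. induction l; simpl; intros H; auto. rewrite H, IHl; auto. Qed.

Lemma lsum_le {T} (f g : T -> R) l : (forall x, In x l -> f x <= g x) -> lsum f l <= lsum g l.
Proof. induction l; simpl; intros H; [lra|].
 assert (f a <= g a) by auto. assert (lsum f l <= lsum g l) by auto. lra. Qed.

Lemma lsum_plus {T} (f g : T -> R) l : lsum (fun x => f x + g x) l = lsum f l + lsum g l.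
Proof. induction l; simpl; lra. Qed.

Lemma lsum_scal {T} (c : R) (f : T -> R) l : lsum (fun x => c * f x) l = c * lsum f l.
Proof. induction l; simpl; [lra|rewrite IHl; lra]. Qed.

Lemma lsum_minus {T} (f g : T -> R) l : lsum (fun x => f x - g x) l = lsum f l - lsum g l.
Proof. induction l; simpl; lra. Qed.

Lemma lsum_incl_le {T} (f : T -> R) (l1 : list T) : forall l2,
  NoDup l1 -> NoDup l2 -> incl l1 l2 -> (forall x, In x l2 -> 0 <= f x) ->
  lsum f l1 <= lsum f l2.
Proof.
  induction l1 as [|a l1 IH]; intros l2 N1 N2 Hi Hf; simpl.
  - apply lsum_nonneg; auto.
  - assert (Ha : In a l2) by (apply Hi; simpl; auto).
    destruct (in_split _ _ Ha) as [u [v ->]].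
    rewrite lsum_app; simpl.
    inversion N1; subst.
    assert (lsum f l1 <= lsum f (u ++ v)).
    { apply IH; auto. eapply NoDup_remove_1; eauto.
      intros x Hx. assert (In x (u ++ a :: v)) by (apply Hi; simpl; auto).
      apply in_app_or in H. apply in_or_app. destruct H as [H|[H|H]]; auto.
      subst; contradiction.
      intros x Hx; apply Hf. apply in_app_or in Hx; apply in_or_app; simpl; tauto. }
    rewrite lsum_app in H. lra.
Qed.

Lemma merge_lists {T} (P : T -> Prop) l1 l2 : Forall P l1 -> Forall P l2 ->
  exists l, NoDup l /\ Forall P l /\ incl l1 l /\ incl l2 l.
Proof.
  intros H1 H2. exists (nodup cdec (l1 ++ l2)). split; [apply NoDup_nodup|].
  split. apply Forall_forall. intros x Hx. apply nodup_In in Hx.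
  apply in_app_or in Hx. destruct Hx; [eapply Forall_forall in H1|eapply Forall_forall in H2]; eauto.
  split; intros x Hx; apply nodup_In; apply in_or_app; auto.
Qed.

Lemma Rabs_le_inv_ x y : Rabs x <= y -> -y <= x <= y.
Proof. intros H. unfold Rabs in *; destruct (Rcase_abs x); lra. Qed.

Section Sums.
Variable n : nat.

Definition nneg (f : (nat -> nat) -> R) := forall k, cfg n k -> 0 <= f k.

Lemma HasSum_le f s l : HasSum n f s -> NoDup l -> Forall (cfg n) l -> lsum f l <= s.
Proof. intros [H _] N F. apply H. eauto. Qed.

Lemma HasSum_approx f s eps : HasSum n f s -> 0 < eps ->
  exists l, NoDup l /\ Forall (cfg n) l /\ s - eps < lsum f l.
Proof.
  intros [H1 H2] He.
  destruct (classic (exists l, NoDup l /\ Forall (cfg n) l /\ s - eps < lsum f l)) as [E|E]; auto.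
  exfalso. assert (s <= s - eps). apply H2. intros x [l [N [F ->]]].
  destruct (Rle_lt_dec (lsum f l) (s-eps)); auto. exfalso; apply E; eauto. lra.
Qed.

Lemma HasSum_intro f s :
  (forall l, NoDup l -> Forall (cfg n) l -> lsum f l <= s) ->
  (forall eps, 0 < eps -> exists l, NoDup l /\ Forall (cfg n) l /\ s - eps < lsum f l) ->
  HasSum n f s.
Proof.
  intros H1 H2. split.
  - intros x [l [N [F ->]]]. auto.
  - intros b Hb. destruct (Rle_lt_dec s b); auto. exfalso.
    destruct (H2 (s - b)) as [l [N [F Hl]]]. lra.
    assert (lsum f l <= b) by (apply Hb; eauto). lra.
Qed.

Lemma HasSum_unique f s t : HasSum n f s -> HasSum n f t -> s = t.
Proof. apply is_lub_u. Qed.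

Lemma tsum_eq f s : HasSum n f s -> tsum n f = s.
Proof. intros H. unfold tsum. apply (HasSum_unique f); auto.
  apply epsilon_spec. eauto. Qed.

Lemma HasSum_ext f g s : (forall k, cfg n k -> f k = g k) -> HasSum n f s -> HasSum n g s.
Proof.
  intros E H. assert (Hl : forall l, Forall (cfg n) l -> lsum f l = lsum g l).
  { intros l F; apply lsum_ext; intros x Hx; apply E; eapply Forall_forall; eauto. }
  apply HasSum_intro.
  - intros l N F; rewrite <- Hl; auto; eapply HasSum_le; eauto.
  - intros e He; destruct (HasSum_approx f s e H He) as [l [N [F L]]]; exists l; rewrite <- Hl; auto.
Qed.

Lemma tsum_ext f g : (forall k, cfg n k -> f k = g k) -> tsum n f = tsum n g.
Proof. intros E. unfold tsum. f_equal. apply functional_extensionality; intros s.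
  apply propositional_extensionality; split; apply HasSum_ext; auto. intros; symmetry; auto. Qed.

Lemma HasSum_plus f g s t : nneg f -> nneg g -> HasSum n f s -> HasSum n g t ->
  HasSum n (fun k => f k + g k) (s + t).
Proof.
  intros Pf Pg Hf Hg. apply HasSum_intro.
  - intros l N F. rewrite lsum_plus.
    assert (lsum f l <= s) by (eapply HasSum_le; eauto).
    assert (lsum g l <= t) by (eapply HasSum_le; eauto). lra.
  - intros e He. destruct (HasSum_approx f s (e/2) Hf) as [l1 [N1 [F1 L1]]]; [lra|].
    destruct (HasSum_approx g t (e/2) Hg) as [l2 [N2 [F2 L2]]]; [lra|].
    destruct (merge_lists _ _ _ F1 F2) as [l [N [F [I1 I2]]]].
    exists l; split; auto; split; auto. rewrite lsum_plus.
    assert (lsum f l1 <= lsum f l). apply lsum_incl_le; auto.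
    intros x Hx; apply Pf; eapply Forall_forall; eauto.
    assert (lsum g l2 <= lsum g l). apply lsum_incl_le; auto.
    intros x Hx; apply Pg; eapply Forall_forall; eauto. lra.
Qed.

Lemma HasSum_scal c f s : 0 <= c -> HasSum n f s -> HasSum n (fun k => c * f k) (c * s).
Proof.
  intros Hc Hf. apply HasSum_intro.
  - intros l N F. rewrite lsum_scal. apply Rmult_le_compat_l; auto. eapply HasSum_le; eauto.
  - intros e He. destruct (Req_dec c 0) as [->|Hc0].
    + exists nil; split; [constructor|split; [constructor|simpl; lra]].
    + destruct (HasSum_approx f s (e / c) Hf) as [l [N [F L]]].
      apply Rdiv_lt_0_compat; lra.
      exists l; split; auto; split; auto. rewrite lsum_scal.
      assert (c * (s - e / c) < c * lsum f l) by (apply Rmult_lt_compat_l; lra).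
      replace (c * (s - e / c)) with (c*s - e) in H by (field; auto). lra.
Qed.

Lemma HasSum_exists_le f g t : nneg f -> (forall k, cfg n k -> f k <= g k) -> HasSum n g t ->
  exists s, HasSum n f s /\ s <= t.
Proof.
  intros Pf Le Hg.
  set (E := fun x => exists l, NoDup l /\ Forall (cfg n) l /\ x = lsum f l).
  assert (B : bound E). { exists t. intros x [l [N [F ->]]].
    apply Rle_trans with (lsum g l). apply lsum_le; intros; apply Le; eapply Forall_forall; eauto.
    eapply HasSum_le; eauto. }
  assert (Ne : exists x, E x) by (exists 0; exists nil; repeat constructor).
  destruct (completeness E B Ne) as [s Hs]. exists s; split; auto.
  apply Hs. intros x [l [N [F ->]]].
  apply Rle_trans with (lsum g l). apply lsum_le; intros; apply Le; eapply Forall_forall; eauto.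
  eapply HasSum_le; eauto.
Qed.

Definition summable f := exists s, HasSum n f s.

Lemma tsum_spec f : summable f -> HasSum n f (tsum n f).
Proof. intros [s H]. rewrite (tsum_eq _ _ H); auto. Qed.

Lemma summable_le f g : nneg f -> (forall k, cfg n k -> f k <= g k) -> summable g -> summable f.
Proof. intros P L [t H]. destruct (HasSum_exists_le f g t P L H) as [s [Hs _]]; exists s; auto. Qed.

Lemma tsum_le f g : nneg f -> (forall k, cfg n k -> f k <= g k) -> summable g -> tsum n f <= tsum n g.
Proof. intros P L [t H]. destruct (HasSum_exists_le f g t P L H) as [s [Hs Hst]].
  rewrite (tsum_eq _ _ Hs), (tsum_eq _ _ H); auto. Qed.

Lemma tsum_plus f g : nneg f -> nneg g -> summable f -> summable g ->
  tsum n (fun k => f k + g k) = tsum n f + tsum n g.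
Proof. intros Pf Pg Sf Sg. apply tsum_eq. apply HasSum_plus; auto; apply tsum_spec; auto. Qed.

Lemma summable_plus f g : nneg f -> nneg g -> summable f -> summable g -> summable (fun k => f k + g k).
Proof. intros Pf Pg [s Hs] [t Ht]; exists (s+t); apply HasSum_plus; auto. Qed.

Lemma tsum_scal c f : 0 <= c -> summable f -> tsum n (fun k => c * f k) = c * tsum n f.
Proof. intros Hc Sf. apply tsum_eq. apply HasSum_scal; auto; apply tsum_spec; auto. Qed.

Lemma summable_scal c f : 0 <= c -> summable f -> summable (fun k => c * f k).
Proof. intros Hc [s H]; exists (c*s); apply HasSum_scal; auto. Qed.

Lemma lsum_le_tsum f l : nneg f -> summable f -> NoDup l -> Forall (cfg n) l -> lsum f l <= tsum n f.
Proof. intros P S N F. eapply HasSum_le; eauto. apply tsum_spec; auto. Qed.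

Lemma tsum_nonneg f : nneg f -> summable f -> 0 <= tsum n f.
Proof. intros P S. apply Rle_trans with (lsum f nil). simpl; lra.
  apply lsum_le_tsum; auto; constructor. Qed.

Lemma tsum_diff_bound f g m b :
  nneg f -> nneg g -> nneg m -> nneg b -> summable f -> summable g -> summable m -> summable b ->
  (forall k, cfg n k -> Rabs (f k - g k - m k) <= b k) ->
  Rabs (tsum n f - tsum n g - tsum n m) <= tsum n b.
Proof.
  intros Pf Pg Pm Pb Sf Sg Sm Sb H.
  assert (A : tsum n f <= tsum n (fun k => g k + m k + b k)).
  { apply tsum_le; auto. intros k Hk. specialize (H k Hk). apply Rabs_le_inv_ in H. lra.
    repeat apply summable_plus; auto; intros k Hk; try (specialize (Pg k Hk); specialize (Pm k Hk); lra); auto. }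
  assert (B : tsum n (fun k => g k + m k) <= tsum n (fun k => f k + b k)).
  { apply tsum_le. intros k Hk. specialize (Pg k Hk); specialize (Pm k Hk); lra.
    intros k Hk. specialize (H k Hk). apply Rabs_le_inv_ in H. lra.
    apply summable_plus; auto. }
  assert (Pgm : nneg (fun k => g k + m k)).
  { intros k Hk; specialize (Pg k Hk); specialize (Pm k Hk); lra. }
  assert (Sgm : summable (fun k => g k + m k)) by (apply summable_plus; auto).
  rewrite (tsum_plus (fun k => g k + m k) b Pgm Pb Sgm Sb) in A.
  rewrite (tsum_plus g m Pg Pm Sg Sm) in A, B.
  rewrite (tsum_plus f b Pf Pb Sf Sb) in B.
  apply Rabs_le; lra.
Qed.

End Sums.

Lemma prodR_ext m f f' : (forall j, (j < m)%nat -> f j = f' j) -> prodR m f = prodR m f'.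
Proof. induction m; simpl; intros H; auto. rewrite IHm, H; auto. Qed.

Lemma prodR_pos m f : (forall j, (j < m)%nat -> 0 < f j) -> 0 < prodR m f.
Proof. induction m; simpl; intros H; [lra|]. apply Rmult_lt_0_compat; auto. Qed.

Lemma prodR_nonneg m f : (forall j, (j < m)%nat -> 0 <= f j) -> 0 <= prodR m f.
Proof. induction m; simpl; intros H; [lra|]. apply Rmult_le_pos; auto. Qed.

Lemma prodR_one_change m f f' j c : (j < m)%nat -> f j = f' j * c ->
  (forall x, (x < m)%nat -> x <> j -> f x = f' x) -> prodR m f = prodR m f' * c.
Proof.
  induction m; intros Hj Hc Ho; [lia|]. simpl.
  destruct (Nat.eq_dec j m) as [->|Hne].
  - rewrite Hc. rewrite (prodR_ext m f f'); [ring|]. intros x Hx; apply Ho; lia.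
  - rewrite IHm; [|lia|auto|intros; apply Ho; lia]. rewrite (Ho m); [ring|lia|lia].
Qed.

Lemma prodR_mult m f h : prodR m (fun j => f j * h j) = prodR m f * prodR m h.
Proof. induction m; simpl; [ring|rewrite IHm; ring]. Qed.

Definition inc (k : nat -> nat) (j : nat) : nat -> nat :=
  fun i => if Nat.eqb i j then S (k i) else k i.

Lemma cfg_dec n k j : cfg n k -> cfg n (dec k j).
Proof. intros H i Hi. unfold dec. destruct (Nat.eqb i j); rewrite H; auto. Qed.

Lemma cfg_inc n k j : (j < n)%nat -> cfg n k -> cfg n (inc k j).
Proof. intros Hj H i Hi. unfold inc. destruct (Nat.eqb_spec i j); [lia|auto]. Qed.

Lemma dec_inc k j : dec (inc k j) j = k.
Proof. apply functional_extensionality; intros i. unfold dec, inc.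
  destruct (Nat.eqb_spec i j); lia. Qed.

Lemma inc_dec k j : (0 < k j)%nat -> inc (dec k j) j = k.
Proof. intros H. apply functional_extensionality; intros i. unfold dec, inc.
  destruct (Nat.eqb_spec i j); subst; lia. Qed.

Lemma dec_same k j : dec k j j = (k j - 1)%nat.
Proof. unfold dec; rewrite Nat.eqb_refl; auto. Qed.
Lemma dec_other k j i : i <> j -> dec k j i = k i.
Proof. intros H; unfold dec. destruct (Nat.eqb_spec i j); tauto. Qed.

Lemma dec_comm k i j : dec (dec k i) j = dec (dec k j) i.
Proof. apply functional_extensionality; intros x. unfold dec.
  destruct (Nat.eqb_spec x i); destruct (Nat.eqb_spec x j); auto. Qed.

Lemma cfg_prefix n k j m : (j < n)%nat -> cfg n (prefix k j m).
Proof. intros Hj i Hi. unfold prefix. destruct (Nat.ltb_spec i j); [lia|].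
  destruct (Nat.eqb_spec i j); [lia|auto]. Qed.

Section G.
Variable n : nat.
Variable g : nat -> (nat -> nat) -> R.
Hypothesis Hzr : zr_rates g n.
Hypothesis Hinv : INV g n.

Lemma gfact_pos k : gfact g n k > 0.
Proof.
  unfold gfact. apply prodR_pos. intros j Hj. apply prodR_pos. intros m Hm.
  destruct (Hzr j (prefix k j (S m)) Hj (cfg_prefix n k j (S m) Hj)) as [_ H].
  apply H. unfold prefix. rewrite (proj2 (Nat.ltb_ge j j)), Nat.eqb_refl; lia.
Qed.

Lemma gfact_top k j : cfg n k -> (j < n)%nat -> (0 < k j)%nat -> (forall m, (j < m)%nat -> k m = 0%nat) ->
  gfact g n k = gfact g n (dec k j) * g j k.
Proof.
  intros Hk Hj Hkj Htop. unfold gfact.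
  apply prodR_one_change with (j := j); auto.
  - destruct (k j) as [|m] eqn:E; [lia|]. rewrite dec_same, E. simpl.
    replace (m - 0)%nat with m by lia.
    assert (Hp : prefix k j (S m) = k).
    { apply functional_extensionality; intros x. unfold prefix.
      destruct (Nat.ltb_spec x j); auto. destruct (Nat.eqb_spec x j); subst; auto.
      rewrite Htop; auto; lia. }
    rewrite Hp. f_equal. apply prodR_ext. intros t Ht. f_equal.
    apply functional_extensionality; intros x. unfold prefix.
    destruct (Nat.ltb_spec x j); auto. rewrite dec_other; auto; lia.
  - intros x Hx Hxj. destruct (Nat.lt_ge_cases x j).
    + rewrite dec_other; auto. apply prodR_ext; intros t Ht. f_equal.
      apply functional_extensionality; intros y. unfold prefix.
      destruct (Nat.ltb_spec y x); auto. rewrite dec_other; auto; lia.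
    + rewrite dec_other; auto. rewrite Htop; [simpl; auto|lia].
Qed.

Fixpoint sizek (m : nat) (k : nat -> nat) : nat :=
  match m with O => O | S m' => (sizek m' k + k m')%nat end.

Lemma sizek_dec m k j : (j < m)%nat -> (0 < k j)%nat -> S (sizek m (dec k j)) = sizek m k.
Proof.
  induction m; intros Hj Hk; [lia|]. simpl.
  destruct (Nat.eq_dec j m) as [->|Hne].
  - rewrite dec_same. assert (sizek m (dec k m) = sizek m k).
    { clear IHm. assert (forall p, (p <= m)%nat -> sizek p (dec k m) = sizek p k).
      induction p; simpl; auto. intros; rewrite IHp, dec_other; lia. apply H; lia. }
    lia.
  - rewrite dec_other; auto. rewrite <- IHm; lia.
Qed.

Lemma exists_top k i : (i < n)%nat -> (0 < k i)%nat -> cfg n k ->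
  exists j, (i <= j)%nat /\ (j < n)%nat /\ (0 < k j)%nat /\ forall m, (j < m)%nat -> k m = 0%nat.
Proof.
  intros Hi Hki Hk.
  assert (forall d, (i + d < n)%nat -> (forall m, (i + d < m)%nat -> k m = 0%nat) ->
    exists j, (i <= j)%nat /\ (j < n)%nat /\ (0 < k j)%nat /\ forall m, (j < m)%nat -> k m = 0%nat).
  { induction d; intros Hd Hz.
    - exists i; repeat split; auto; lia || (intros; apply Hz; lia).
    - destruct (Nat.eq_dec (k (i + S d)%nat) 0%nat) as [E|E].
      + apply IHd; [lia|]. intros m Hm. destruct (Nat.eq_dec m (i + S d)%nat); subst; auto. apply Hz; lia.
      + exists (i + S d)%nat; repeat split; auto; lia. }
  apply (H (n - 1 - i)%nat); [lia|]. intros m Hm; apply Hk; lia.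
Qed.

Lemma gfact_dec_aux N : forall k i, (sizek n k <= N)%nat -> cfg n k -> (i < n)%nat -> (0 < k i)%nat ->
  gfact g n k = gfact g n (dec k i) * g i k.
Proof.
  induction N; intros k i Hs Hk Hi Hki.
  - assert (S (sizek n (dec k i)) = sizek n k) by (apply sizek_dec; auto). lia.
  - destruct (exists_top k i Hi Hki Hk) as [j [Hij [Hjn [Hkj Htop]]]].
    destruct (Nat.eq_dec i j) as [<-|Hne].
    + apply gfact_top; auto.
    + rewrite (gfact_top k j Hk Hjn Hkj Htop).
      assert (S (sizek n (dec k j)) = sizek n k) by (apply sizek_dec; auto).
      rewrite (IHN (dec k j) i); try lia; [| apply cfg_dec; auto| rewrite dec_other; auto].
      rewrite (gfact_top (dec k i) j); [| apply cfg_dec; auto | auto | rewrite dec_other; auto; lia |].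
      2:{ intros m Hm. rewrite dec_other; [apply Htop; auto|lia]. }
      rewrite dec_comm.
      assert (Hinvk := Hinv i j k Hi Hjn Hne Hk Hki Hkj).
      assert (P1 : 0 < g i (dec k j)).
      { apply (Hzr i (dec k j) Hi (cfg_dec n k j Hk)). rewrite dec_other; auto. }
      assert (P2 : 0 < g j (dec k i)).
      { apply (Hzr j (dec k i) Hjn (cfg_dec n k i Hk)). rewrite dec_other; auto. }
      assert (E : g i k * g j (dec k i) = g j k * g i (dec k j)).
      { unfold Rdiv in Hinvk.
        apply (Rmult_eq_compat_r (g i (dec k j) * g j (dec k i))) in Hinvk.
        field_simplify in Hinvk; try lra. }
      set (G := gfact g n (dec (dec k i) j)). transitivity (G * (g j k * g i (dec k j))); [ring|]. rewrite <- E; ring.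
Qed.

Lemma gfact_dec k i : cfg n k -> (i < n)%nat -> (0 < k i)%nat ->
  gfact g n k = gfact g n (dec k i) * g i k.
Proof. intros; eapply gfact_dec_aux; eauto. Qed.

Lemma g_weight k i phi : cfg n k -> (i < n)%nat ->
  g i k * weight g n phi k = if Nat.ltb 0 (k i) then phi i * weight g n phi (dec k i) else 0.
Proof.
  intros Hk Hi. destruct (Nat.ltb_spec 0 (k i)).
  - unfold weight. rewrite (gfact_dec k i Hk Hi H).
    rewrite (prodR_one_change n (fun j => phi j ^ k j) (fun j => phi j ^ dec k i j) i (phi i)); auto.
    + assert (gfact g n (dec k i) > 0) by apply gfact_pos.
      assert (0 < g i k) by (apply (Hzr i k Hi Hk); auto). field; lra.
    + rewrite dec_same. destruct (k i); [lia|]. simpl. replace (n0 - 0)%nat with n0 by lia. ring.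
    + intros; rewrite dec_other; auto.
  - assert (k i = 0%nat) by lia. rewrite (proj1 (Hzr i k Hi Hk) H0). ring.
Qed.

End G.

Lemma lsum_filter {T} (p : T -> bool) (h : T -> R) l :
  lsum (fun x => if p x then h x else 0) l = lsum h (filter p l).
Proof. induction l; simpl; auto. destruct (p a); simpl; rewrite IHl; ring. Qed.

Lemma lsum_map {T U} (f : T -> U) (h : U -> R) l : lsum h (map f l) = lsum (fun x => h (f x)) l.
Proof. induction l; simpl; auto. rewrite IHl; auto. Qed.

Lemma NoDup_map_on {T U} (f : T -> U) l : (forall x y, In x l -> In y l -> f x = f y -> x = y) ->
  NoDup l -> NoDup (map f l).
Proof.
  induction l; intros Hi N; simpl; constructor.
  - inversion N; subst. intros Hin. apply in_map_iff in Hin. destruct Hin as [x [E Hx]].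
    assert (x = a) by (apply Hi; simpl; auto). subst; auto.
  - inversion N; subst. apply IHl; auto. intros; apply Hi; simpl; auto.
Qed.

Lemma HasSum_shift n G s i : (i < n)%nat -> nneg n G -> HasSum n G s ->
  HasSum n (fun k => if Nat.ltb 0 (k i) then G (dec k i) else 0) s.
Proof.
  intros Hi PG HG. apply HasSum_intro.
  - intros l N F. rewrite lsum_filter. rewrite <- (lsum_map (fun k => dec k i) G).
    apply (HasSum_le n G s); auto.
    + apply NoDup_map_on; [|apply NoDup_filter; auto].
      intros x y Hx Hy E. apply filter_In in Hx, Hy. destruct Hx as [_ Hx]; destruct Hy as [_ Hy].
      apply Nat.ltb_lt in Hx, Hy. rewrite <- (inc_dec x i Hx), <- (inc_dec y i Hy), E; auto.
    + apply Forall_forall. intros x Hx. apply in_map_iff in Hx. destruct Hx as [y [<- Hy]].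
      apply filter_In in Hy. apply cfg_dec. eapply Forall_forall; eauto. tauto.
  - intros e He. destruct (HasSum_approx n G s e HG He) as [l [N [F L]]].
    exists (map (fun k => inc k i) l). split; [|split].
    + apply NoDup_map_on; auto. intros x y _ _ E. rewrite <- (dec_inc x i), <- (dec_inc y i), E; auto.
    + apply Forall_forall. intros x Hx. apply in_map_iff in Hx. destruct Hx as [y [<- Hy]].
      apply cfg_inc; auto. eapply Forall_forall; eauto.
    + rewrite lsum_map. erewrite lsum_ext; [exact L|]. intros x _. simpl.
      unfold inc at 1. rewrite Nat.eqb_refl. simpl. rewrite dec_inc; auto.
Qed.

Fixpoint sumR (m : nat) (f : nat -> R) : R :=
  match m with O => 0 | S m' => sumR m' f + f m' end.

Lemma sumR_ext m f f' : (forall j, (j < m)%nat -> f j = f' j) -> sumR m f = sumR m f'.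
Proof. induction m; simpl; intros H; auto. rewrite IHm, H; auto. Qed.

Lemma pow_ge1 d m : 0 <= d -> 1 <= (1 + d) ^ m.
Proof. intros H; induction m; simpl; [lra|]. nra. Qed.

Lemma bernoulli y m : 0 <= y -> 1 + INR m * y <= (1 + y) ^ m.
Proof. intros H; induction m; [simpl; lra|]. rewrite S_INR; simpl.
  assert (0 <= INR m) by apply pos_INR. assert (1 <= (1+y)^m) by (apply pow_ge1; auto). nra. Qed.

Lemma single_bound (de d : R) m : Rabs de <= d ->
  Rabs ((1 + de) ^ m - 1) <= INR m * d * (1 + d) ^ m /\
  Rabs ((1 + de) ^ m - 1 - INR m * de) <= INR m ^ 2 * d ^ 2 * (1 + d) ^ m.
Proof.
  intros Hd. assert (d0 : 0 <= d) by (pose proof (Rabs_pos de); lra).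
  apply Rabs_le_inv_ in Hd.
  induction m.
  - simpl. replace (1 - 1) with 0 by ring. rewrite Rabs_R0. split; [lra|]. replace (0 - 0 * de) with 0 by ring. rewrite Rabs_R0; lra.
  - destruct IHm as [I1 I2]. rewrite S_INR. simpl.
    assert (X1 : 1 <= (1+d)^m) by (apply pow_ge1; auto).
    assert (Hm : 0 <= INR m) by apply pos_INR.
    set (P := (1+de)^m) in *. set (X := (1+d)^m) in *.
    apply Rabs_le_inv_ in I1. apply Rabs_le_inv_ in I2.
    split; apply Rabs_le.
    +
      assert (E : (1 + de) * P - 1 = (P - 1) * (1 + de) + de) by ring.
      rewrite E.
      assert (Rabs ((P - 1) * (1 + de)) <= INR m * d * X * (1 + d)).
      { rewrite Rabs_mult. apply Rmult_le_compat; try apply Rabs_pos; apply Rabs_le; lra. }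
      apply Rabs_le_inv_ in H. split; nra.
    + assert (E : (1 + de) * P - 1 - (INR m + 1) * de = (P - 1 - INR m * de) * (1 + de) + INR m * de * de) by ring.
      rewrite E.
      assert (Rabs ((P - 1 - INR m * de) * (1 + de)) <= INR m ^ 2 * d ^ 2 * X * (1 + d)).
      { rewrite Rabs_mult. apply Rmult_le_compat; try apply Rabs_pos; apply Rabs_le; lra. }
      apply Rabs_le_inv_ in H.
      assert (0 <= de * de <= d * d) by nra.
      set (W := d^2 * X * (1+d)).
      assert (W0 : 0 <= W) by (unfold W; apply Rmult_le_pos; [apply Rmult_le_pos|]; nra).
      assert (Wd : d * d <= W).
      { unfold W. replace (d*d) with (d^2*1) by ring. rewrite Rmult_assoc. apply Rmult_le_compat_l; nra. }
      assert (E1 : INR m * de * de <= INR m * W).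
      { rewrite Rmult_assoc. apply Rmult_le_compat_l; lra. }
      assert (E2 : 0 <= INR m * de * de) by (rewrite Rmult_assoc; apply Rmult_le_pos; lra).
      replace ((INR m + 1) * ((INR m + 1) * 1) * (d * (d * 1)) * ((1 + d) * X)) with (INR m ^2 * W + (2 * INR m + 1) * W) by (unfold W; ring).
      idtac. assert (INR m ^ 2 * d ^ 2 * X * (1 + d) = INR m ^ 2 * W) by (unfold W; ring).
      assert (0 <= INR m * W) by (apply Rmult_le_pos; lra).
      split; lra.
Qed.

Lemma sizek_S m k : sizek (S m) k = (sizek m k + k m)%nat.
Proof. reflexivity. Qed.

Lemma prod_bound (de : nat -> R) (d : R) m k : 0 <= d -> (forall j, (j < m)%nat -> Rabs (de j) <= d) ->
  let Q := prodR m (fun j => (1 + de j) ^ k j) in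
  let S := INR (sizek m k) in
  Rabs (Q - 1) <= S * d * (1 + d) ^ (sizek m k) /\
  Rabs (Q - 1 - sumR m (fun j => INR (k j) * de j)) <= S ^ 2 * d ^ 2 * (1 + d) ^ (sizek m k).
Proof.
  intros d0 Hd. induction m; simpl.
  - split; apply Rabs_le; lra.
  - destruct IHm as [I1 I2]. intros; apply Hd; lia.
    destruct (single_bound (de m) d (k m)) as [J1 J2]. apply Hd; lia.
    rewrite plus_INR, pow_add.
    set (A := prodR m (fun j => (1 + de j) ^ k j)) in *.
    set (B := (1 + de m) ^ k m) in *.
    set (a := sumR m (fun j => INR (k j) * de j)) in *.
    set (S0 := INR (sizek m k)) in *. set (mm := INR (k m)) in *.
    set (X := (1 + d) ^ sizek m k) in *. set (Y := (1 + d) ^ k m) in *.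
    assert (X1 : 1 <= X) by (apply pow_ge1; auto). assert (Y1 : 1 <= Y) by (apply pow_ge1; auto).
    assert (S0p : 0 <= S0) by apply pos_INR. assert (mp : 0 <= mm) by apply pos_INR.
    assert (Ha : Rabs a <= S0 * d).
    { unfold a, S0. clear -Hd d0. induction m; simpl. rewrite Rabs_R0; lra.
      rewrite plus_INR. eapply Rle_trans; [apply Rabs_triang|].
      assert (Rabs (INR (k m) * de m) <= INR (k m) * d).
      { rewrite Rabs_mult, Rabs_right; [|apply Rle_ge, pos_INR]. apply Rmult_le_compat_l; [apply pos_INR|]. apply Hd; lia. }
      assert (Rabs (sumR m (fun j => INR (k j) * de j)) <= INR (sizek m k) * d).
      { apply IHm. intros; apply Hd; lia. }
      lra. }
    assert (HB : Rabs B <= Y).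
    { unfold B, Y. rewrite <- RPow_abs. apply pow_incr. split; [apply Rabs_pos|].
      eapply Rle_trans; [apply Rabs_triang|]. rewrite Rabs_R1. assert (Rabs (de m) <= d) by (apply Hd; lia). lra. }
    split.
    + replace (A * B - 1) with ((A - 1) * B + (B - 1)) by ring.
      eapply Rle_trans; [apply Rabs_triang|]. rewrite Rabs_mult.
      assert (Rabs (A - 1) * Rabs B <= S0 * d * X * Y).
      { apply Rmult_le_compat; try apply Rabs_pos; auto. }
      assert (md : 0 <= mm * d) by (apply Rmult_le_pos; lra).
      assert (mm * d * Y <= mm * d * X * Y).
      { replace (mm*d*X*Y) with ((mm*d)*(X*Y)) by ring. apply Rmult_le_compat_l; nra. }
      lra.
    + replace (A * B - 1 - (a + mm * de m)) with ((A - 1 - a) * B + a * (B - 1) + (B - 1 - mm * de m)) by ring.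
      eapply Rle_trans; [apply Rabs_triang|]. eapply Rle_trans; [apply Rplus_le_compat_r; apply Rabs_triang|].
      rewrite !Rabs_mult.
      assert (T1 : Rabs (A - 1 - a) * Rabs B <= S0 ^ 2 * d ^ 2 * X * Y).
      { apply Rmult_le_compat; try apply Rabs_pos; auto. }
      assert (T2 : Rabs a * Rabs (B - 1) <= S0 * d * (mm * d * Y)).
      { apply Rmult_le_compat; try apply Rabs_pos; auto. }
      assert (XY : Y <= X * Y) by nra.
      assert (0 <= d*d) by nra.
      assert (T3 : S0 * d * (mm * d * Y) <= S0 * mm * d^2 * X * Y).
      { replace (S0 * d * (mm * d * Y)) with ((S0 * mm * (d*d)) * Y) by ring.
        replace (S0 * mm * d^2 * X * Y) with ((S0*mm*(d*d)) * (X*Y)) by ring.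
        apply Rmult_le_compat_l; auto. apply Rmult_le_pos; [nra|auto]. }
      assert (T4 : mm ^ 2 * d ^ 2 * Y <= mm^2 * d^2 * X * Y).
      { replace (mm^2*d^2*X*Y) with ((mm^2*d^2)*(X*Y)) by ring. apply Rmult_le_compat_l; nra. }
      assert (0 <= S0 * mm * d^2 * X * Y).
      { repeat apply Rmult_le_pos; nra. }
      replace ((S0 + mm) * ((S0 + mm) * 1) * (d * (d * 1)) * (X * Y)) with
        (S0^2*d^2*X*Y + 2*(S0*mm*d^2*X*Y) + mm^2*d^2*X*Y) by ring.
      lra.
Qed.

Lemma tsum_sumR n m (h : nat -> (nat -> nat) -> R) :
  (forall j, (j < m)%nat -> nneg n (h j) /\ summable n (h j)) ->
  nneg n (fun k => sumR m (fun j => h j k)) /\ summable n (fun k => sumR m (fun j => h j k)) /\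
  tsum n (fun k => sumR m (fun j => h j k)) = sumR m (fun j => tsum n (h j)).
Proof.
  induction m; intros H; simpl.
  - split; [intros k _; lra|]. split. exists 0. apply HasSum_intro.
    intros l _ _. clear. induction l; simpl; lra.
    intros e He; exists nil; repeat constructor; simpl; lra.
    apply tsum_eq. apply HasSum_intro. intros l _ _. clear. induction l; simpl; lra.
    intros e He; exists nil; repeat constructor; simpl; lra.
  - destruct IHm as [P [S E]]. intros; apply H; lia.
    destruct (H m) as [Pm Sm]; [lia|].
    split; [intros k Hk; specialize (P k Hk); specialize (Pm k Hk); simpl in *; lra|].
    split; [apply summable_plus; auto|].
    rewrite tsum_plus; auto. rewrite E; auto.
Qed.

Lemma sumR_plus m f h : sumR m (fun j => f j + h j) = sumR m f + sumR m h.
Proof. induction m; simpl; [ring|rewrite IHm; ring]. Qed.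
Lemma sumR_minus m f h : sumR m (fun j => f j - h j) = sumR m f - sumR m h.
Proof. induction m; simpl; [ring|rewrite IHm; ring]. Qed.
Lemma sumR_scal m c f : sumR m (fun j => c * f j) = c * sumR m f.
Proof. induction m; simpl; [ring|rewrite IHm; ring]. Qed.

Lemma prodR_const m k c : prodR m (fun j => c ^ k j) = c ^ sizek m k.
Proof. induction m; simpl; auto. rewrite IHm, pow_add; ring. Qed.

Definition pos_part (x : R) := Rmax x 0.
Definition neg_part (x : R) := Rmax (- x) 0.
Lemma pos_neg x : x = pos_part x - neg_part x.
Proof. unfold pos_part, neg_part, Rmax. destruct (Rle_dec x 0), (Rle_dec (-x) 0); lra. Qed.
Lemma pos_part_ge0 x : 0 <= pos_part x.
Proof. unfold pos_part, Rmax; destruct (Rle_dec x 0); lra. Qed.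
Lemma neg_part_ge0 x : 0 <= neg_part x.
Proof. unfold neg_part, Rmax; destruct (Rle_dec (-x) 0); lra. Qed.

Lemma Tpow T : 1 <= T -> T <= T^5 /\ T * T <= T^5 /\ T*T*T*T <= T^5.
Proof. intros H.
  assert (A : T^1 <= T^5) by (apply Rle_pow; auto; lia).
  assert (B : T^2 <= T^5) by (apply Rle_pow; auto; lia).
  assert (C : T^4 <= T^5) by (apply Rle_pow; auto; lia).
  simpl in A, B, C. rewrite !Rmult_1_r in A, B, C. simpl. rewrite !Rmult_1_r.
  repeat split; try lra. Qed.

Lemma prodR_le m f f' : (forall j, (j < m)%nat -> 0 <= f j <= f' j) -> prodR m f <= prodR m f'.
Proof. induction m; simpl; intros H; [lra|].
  assert (0 <= prodR m f) by (apply prodR_nonneg; intros; apply H; lia).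
  apply Rmult_le_compat; [auto|apply H; lia|apply IHm; intros; apply H; lia|apply H; lia]. Qed.

Section Exp.
Variable n : nat.
Variable g : nat -> (nat -> nat) -> R.
Hypothesis Hzr : zr_rates g n.
Variable phi0 : nat -> R.
Hypothesis Hphi0 : forall j, (j < n)%nat -> 0 < phi0 j.
Variable y : R.
Hypothesis Hy : 0 < y <= 1.
Definition Bw k := weight g n phi0 k * (1 + y) ^ (5 * sizek n k).
Hypothesis HB : summable n Bw.

Lemma weight_pos phi k : (forall j, (j < n)%nat -> 0 < phi j) -> 0 < weight g n phi k.
Proof. intros H. unfold weight. apply Rdiv_lt_0_compat. apply prodR_pos; intros; apply pow_lt; auto.
  apply gfact_pos; auto. Qed.

Lemma weight_scale psi de k : (forall j, (j < n)%nat -> psi j = phi0 j * (1 + de j)) ->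
  weight g n psi k = weight g n phi0 k * prodR n (fun j => (1 + de j) ^ k j).
Proof.
  intros H. unfold weight. rewrite (prodR_ext n (fun j => psi j ^ k j) (fun j => phi0 j ^ k j * (1 + de j) ^ k j)).
  rewrite prodR_mult. unfold Rdiv. ring.
  intros j Hj. rewrite H; auto. apply Rpow_mult_distr.
Qed.

Lemma Bw_nneg : nneg n Bw.
Proof. intros k _. unfold Bw. apply Rmult_le_pos. left; apply weight_pos; auto.
  apply pow_le; lra. Qed.

Lemma T_facts k : let s := INR (sizek n k) in let T := (1 + y) ^ sizek n k in
  1 <= T /\ s <= T / y /\ 1 + s <= 2 * T / y /\ Bw k = weight g n phi0 k * T ^ 5.
Proof.
  intros s T. assert (T1 : 1 <= T) by (apply pow_ge1; lra).
  assert (Hb := bernoulli y (sizek n k) (ltac:(lra))). fold s T in Hb.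
  assert (s0 : 0 <= s) by apply pos_INR.
  split; auto. split. apply Rmult_le_reg_r with y; [lra|]. unfold Rdiv; rewrite Rmult_assoc, Rinv_l; lra.
  split. apply Rmult_le_reg_r with y; [lra|]. unfold Rdiv; rewrite Rmult_assoc, Rinv_l; [|lra].
  nra. unfold Bw. rewrite Nat.mul_comm, pow_mult. auto.
Qed.

Lemma INR_kj_le k j : (j < n)%nat -> INR (k j) <= INR (sizek n k).
Proof. intros Hj. apply le_INR. clear -Hj. induction n; [lia|]. simpl.
  destruct (Nat.eq_dec j n0); [subst; lia|]. specialize (IHn0 ltac:(lia)); lia. Qed.

Variable F : (nat -> nat) -> R.
Hypothesis HF : forall k, cfg n k -> 0 <= F k <= 1 + INR (sizek n k).

Lemma w0_pos k : 0 < weight g n phi0 k.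
Proof. apply weight_pos; auto. Qed.

Lemma bound_a k d : cfg n k -> 0 <= d <= y -> F k * (weight g n phi0 k * (1 + d) ^ sizek n k) <= 2 / y * Bw k.
Proof.
  intros Hk Hd. destruct (HF k Hk). destruct (T_facts k) as [T1 [Ts [T1s EB]]].
  set (T := (1 + y) ^ sizek n k) in *. set (s := INR (sizek n k)) in *.
  assert (w := w0_pos k). set (w0 := weight g n phi0 k) in *.
  assert ((1+d)^sizek n k <= T) by (apply pow_incr; lra).
  assert (0 <= (1+d)^sizek n k) by (apply pow_le; lra).
  rewrite EB.
  assert (F k * (1+d)^sizek n k <= 2 * T / y * T) by (apply Rmult_le_compat; lra).
  assert (T * T <= T^5) by apply (Tpow T T1).
  assert (2 * T / y * T <= 2 / y * T^5).
  { unfold Rdiv. replace (2 * T * / y * T) with (2 * / y * (T * T)) by ring.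
    apply Rmult_le_compat_l; auto. apply Rmult_le_pos; [lra|]. left; apply Rinv_0_lt_compat; lra. }
  replace (F k * (w0 * (1 + d) ^ sizek n k)) with (w0 * (F k * (1+d)^sizek n k)) by ring.
  replace (2 / y * (w0 * T ^ 5)) with (w0 * (2 / y * T ^ 5)) by ring.
  apply Rmult_le_compat_l; lra.
Qed.

Lemma bound_b k j : cfg n k -> (j < n)%nat -> F k * INR (k j) * weight g n phi0 k <= 2 / y ^ 2 * Bw k.
Proof.
  intros Hk Hj. destruct (HF k Hk). destruct (T_facts k) as [T1 [Ts [T1s EB]]].
  set (T := (1 + y) ^ sizek n k) in *. set (s := INR (sizek n k)) in *.
  assert (w := w0_pos k). set (w0 := weight g n phi0 k) in *.
  assert (kj := INR_kj_le k j Hj). assert (0 <= INR (k j)) by apply pos_INR. fold s in kj.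
  rewrite EB.
  assert (F k * INR (k j) <= 2 * T / y * (T / y)) by (apply Rmult_le_compat; lra).
  assert (T * T <= T^5) by apply (Tpow T T1).
  assert (2 * T / y * (T / y) <= 2 / y^2 * T^5).
  { replace (2 * T / y * (T / y)) with (2 / y^2 * (T * T)) by (field; lra).
    apply Rmult_le_compat_l; auto. unfold Rdiv; apply Rmult_le_pos; [lra|]. left; apply Rinv_0_lt_compat; apply pow_lt; lra. }
  replace (F k * INR (k j) * w0) with (w0 * (F k * INR (k j))) by ring.
  replace (2 / y^2 * (w0 * T ^ 5)) with (w0 * (2 / y^2 * T ^ 5)) by ring.
  apply Rmult_le_compat_l; lra.
Qed.

Lemma bound_c k d : cfg n k -> 0 <= d <= y ->
  F k * weight g n phi0 k * (INR (sizek n k) ^ 2 * d ^ 2 * (1 + d) ^ sizek n k) <= d ^ 2 * (2 / y ^ 3) * Bw k.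
Proof.
  intros Hk Hd. destruct (HF k Hk). destruct (T_facts k) as [T1 [Ts [T1s EB]]].
  set (T := (1 + y) ^ sizek n k) in *. set (s := INR (sizek n k)) in *.
  assert (w := w0_pos k). set (w0 := weight g n phi0 k) in *.
  assert (X1 : (1+d)^sizek n k <= T) by (apply pow_incr; lra).
  assert (X0 : 0 <= (1+d)^sizek n k) by (apply pow_le; lra).
  assert (s0 : 0 <= s) by apply pos_INR.
  rewrite EB.
  assert (A1 : s^2 <= (T/y)^2) by (apply pow_incr; lra).
  assert (A2 : F k * s^2 <= 2 * T / y * (T/y)^2) by (apply Rmult_le_compat; try lra; apply pow_le; lra).
  assert (A3 : F k * s^2 * (1+d)^sizek n k <= 2 * T / y * (T/y)^2 * T).
  { apply Rmult_le_compat; try lra. apply Rmult_le_pos; [lra|apply pow_le; lra]. }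
  assert (T*T*T*T <= T^5) by apply (Tpow T T1).
  assert (A4 : 2 * T / y * (T/y)^2 * T <= 2 / y^3 * T^5).
  { replace (2 * T / y * (T / y)^2 * T) with (2 / y^3 * (T*T*T*T)) by (field; lra).
    apply Rmult_le_compat_l; auto. unfold Rdiv; apply Rmult_le_pos; [lra|]. left; apply Rinv_0_lt_compat; apply pow_lt; lra. }
  replace (F k * w0 * (s ^ 2 * d ^ 2 * (1 + d) ^ sizek n k)) with ((w0 * d^2) * (F k * s^2 * (1+d)^sizek n k)) by ring.
  replace (d ^ 2 * (2 / y ^ 3) * (w0 * T ^ 5)) with ((w0 * d^2) * (2 / y^3 * T ^ 5)) by ring.
  apply Rmult_le_compat_l; [apply Rmult_le_pos; [lra|apply pow_le; lra]|lra].
Qed.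

Lemma summable_Fj j : (j < n)%nat -> summable n (fun k => F k * INR (k j) * weight g n phi0 k).
Proof.
  intros Hj. apply summable_le with (fun k => 2 / y^2 * Bw k).
  intros k Hk. destruct (HF k Hk). assert (0 <= INR (k j)) by apply pos_INR. assert (w := w0_pos k). 
  apply Rmult_le_pos; [apply Rmult_le_pos|]; lra.
  intros k Hk; apply bound_b; auto.
  apply summable_scal; auto. unfold Rdiv; apply Rmult_le_pos; [lra|left; apply Rinv_0_lt_compat, pow_lt; lra].
Qed.

Lemma expansion psi de d : (forall j, (j < n)%nat -> psi j = phi0 j * (1 + de j)) ->
  (forall j, (j < n)%nat -> Rabs (de j) <= d) -> 0 <= d <= y ->
  summable n (fun k => F k * weight g n psi k) /\
  Rabs (tsum n (fun k => F k * weight g n psi k) - tsum n (fun k => F k * weight g n phi0 k)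
        - sumR n (fun j => de j * tsum n (fun k => F k * INR (k j) * weight g n phi0 k)))
   <= d ^ 2 * (2 / y ^ 3) * tsum n Bw.
Proof.
  intros Hpsi Hde Hd.
  assert (Hw : forall k, weight g n psi k = weight g n phi0 k * prodR n (fun j => (1 + de j) ^ k j)).
  { intros; apply weight_scale; auto. }
  assert (c2y : 0 <= 2 / y) by (unfold Rdiv; apply Rmult_le_pos; [lra|left; apply Rinv_0_lt_compat; lra]).
  assert (c3y : 0 <= 2 / y^3) by (unfold Rdiv; apply Rmult_le_pos; [lra|left; apply Rinv_0_lt_compat, pow_lt; lra]).
  assert (Ppsi : nneg n (fun k => F k * weight g n psi k)).
  { intros k Hk. destruct (HF k Hk). apply Rmult_le_pos; auto. rewrite Hw. apply Rmult_le_pos; [left; apply w0_pos|].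
    apply prodR_nonneg. intros j Hj. apply pow_le. specialize (Hde j Hj). apply Rabs_le_inv_ in Hde. lra. }
  assert (Spsi : summable n (fun k => F k * weight g n psi k)).
  { apply summable_le with (fun k => 2 / y * Bw k); auto.
    intros k Hk. eapply Rle_trans; [|apply (bound_a k d Hk Hd)].
    destruct (HF k Hk). apply Rmult_le_compat_l; auto. rewrite Hw. apply Rmult_le_compat_l; [left; apply w0_pos|].
    rewrite <- prodR_const. apply prodR_le. intros j Hj. specialize (Hde j Hj). apply Rabs_le_inv_ in Hde.
    split; [apply pow_le; lra|apply pow_incr; lra].
    apply summable_scal; auto. }
  split; auto.
  set (X := fun j k => F k * INR (k j) * weight g n phi0 k).
  assert (PX : forall j, (j < n)%nat -> nneg n (X j)).
  { intros j Hj k Hk. destruct (HF k Hk). unfold X. assert (0 <= INR (k j)) by apply pos_INR.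
    assert (w := w0_pos k). apply Rmult_le_pos; [apply Rmult_le_pos|]; lra. }
  assert (SX : forall j, (j < n)%nat -> summable n (X j)) by (intros; apply summable_Fj; auto).
  destruct (tsum_sumR n n (fun j k => pos_part (de j) * X j k)) as [Pp [Sp Ep]].
  { intros j Hj; split. intros k Hk. apply Rmult_le_pos; [apply pos_part_ge0|apply PX; auto].
    apply summable_scal; auto; apply pos_part_ge0. }
  destruct (tsum_sumR n n (fun j k => neg_part (de j) * X j k)) as [Pn [Sn En]].
  { intros j Hj; split. intros k Hk. apply Rmult_le_pos; [apply neg_part_ge0|apply PX; auto].
    apply summable_scal; auto; apply neg_part_ge0. }
  rewrite (sumR_ext n _ (fun j => tsum n (X j) * pos_part (de j) - tsum n (X j) * neg_part (de j))) .
  2:{ intros j Hj. rewrite (pos_neg (de j)) at 1. unfold X; ring. }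
  rewrite sumR_minus.
  rewrite (sumR_ext n (fun j => tsum n (X j) * pos_part (de j)) (fun j => tsum n (fun k => pos_part (de j) * X j k))).
  2:{ intros j Hj. rewrite tsum_scal; [ring|apply pos_part_ge0|auto]. }
  rewrite (sumR_ext n (fun j => tsum n (X j) * neg_part (de j)) (fun j => tsum n (fun k => neg_part (de j) * X j k))).
  2:{ intros j Hj. rewrite tsum_scal; [ring|apply neg_part_ge0|auto]. }
  rewrite <- Ep, <- En.
  set (mp := fun k => sumR n (fun j => pos_part (de j) * X j k)) in *.
  set (mn := fun k => sumR n (fun j => neg_part (de j) * X j k)) in *.
  assert (P0 : nneg n (fun k => F k * weight g n phi0 k)).
  { intros k Hk. destruct (HF k Hk). assert (w := w0_pos k). apply Rmult_le_pos; lra. }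
  assert (S0 : summable n (fun k => F k * weight g n phi0 k)).
  { apply summable_le with (fun k => 2 / y * Bw k); auto.
    intros k Hk. eapply Rle_trans; [|apply (bound_a k 0 Hk ltac:(lra))]. replace (1 + 0) with 1 by ring; rewrite pow1; lra.
    apply summable_scal; auto. }
  assert (Pf : nneg n (fun k => F k * weight g n psi k + mn k)).
  { intros k Hk. specialize (Ppsi k Hk). specialize (Pn k Hk). lra. }
  assert (Sf : summable n (fun k => F k * weight g n psi k + mn k)) by (apply summable_plus; auto).
  assert (Pb : nneg n (fun k => d ^ 2 * (2 / y ^ 3) * Bw k)).
  { intros k Hk. apply Rmult_le_pos; [apply Rmult_le_pos; [apply pow_le; lra|auto]|apply Bw_nneg; auto]. }
  assert (Sb : summable n (fun k => d ^ 2 * (2 / y ^ 3) * Bw k)).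
  { apply summable_scal; auto. apply Rmult_le_pos; [apply pow_le; lra|auto]. }
  assert (D := tsum_diff_bound n _ _ _ _ Pf P0 Pp Pb Sf S0 Sp Sb).
  rewrite (tsum_plus n _ _ Ppsi Pn Spsi Sn) in D.
  assert (cpos : 0 <= d ^ 2 * (2 / y ^ 3)) by (apply Rmult_le_pos; [apply pow_le; lra|auto]).
  rewrite (tsum_scal n _ Bw cpos HB) in D.
  replace (tsum n (fun k => F k * weight g n psi k) - tsum n (fun k => F k * weight g n phi0 k) -
     (tsum n mp - tsum n mn)) with
    (tsum n (fun k => F k * weight g n psi k) + tsum n mn - tsum n (fun k => F k * weight g n phi0 k) - tsum n mp) by ring.
  apply D.
  intros k Hk.
  replace (F k * weight g n psi k + mn k - F k * weight g n phi0 k - mp k) with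
    (F k * weight g n phi0 k * (prodR n (fun j => (1 + de j) ^ k j) - 1 - sumR n (fun j => INR (k j) * de j))).
  2:{ assert (Emp : mp k - mn k = F k * weight g n phi0 k * sumR n (fun j => INR (k j) * de j)).
      { unfold mp, mn. rewrite <- sumR_minus, <- sumR_scal. apply sumR_ext. intros j Hj.
        transitivity ((pos_part (de j) - neg_part (de j)) * X j k); [ring|]. rewrite <- pos_neg. unfold X; ring. }
      rewrite Hw. replace (mp k) with (mn k + F k * weight g n phi0 k * sumR n (fun j => INR (k j) * de j)) by lra.
      ring. }
  destruct (prod_bound de d n k) as [_ P2]; try lra; auto.
  eapply Rle_trans; [|apply (bound_c k d Hk Hd)].
  rewrite Rabs_mult. rewrite (Rabs_right (F k * weight g n phi0 k)); [|apply Rle_ge, P0; auto].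
  apply Rmult_le_compat_l; auto.
Qed.

End Exp.

Lemma quot_exp Z0 M Mb A C d z1 m1 rZ rM :
  0 < Z0 -> 0 <= M <= Mb -> 0 <= A -> 0 <= C -> 0 <= d <= 1 ->
  Rabs z1 <= A * d -> Rabs m1 <= A * d -> Rabs rZ <= C * d ^ 2 -> Rabs rM <= C * d ^ 2 ->
  (A + C) * d <= Z0 / 2 ->
  Rabs ((M + m1 + rM) / (Z0 + z1 + rZ) - M / Z0 - (m1 / Z0 - (M / Z0) * (z1 / Z0)))
    <= d ^ 2 * (2 * (C * Z0 ^ 2 + Mb * Z0 * C + A * Z0 * (A + C) + Mb * A * (A + C)) / Z0 ^ 3).
Proof.
  intros HZ HM HA HC Hd Hz Hm HrZ HrM Hs.
  set (e := z1 + rZ).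
  assert (d2 : d ^ 2 <= d) by (simpl; nra).
  assert (He : Rabs e <= (A + C) * d).
  { unfold e. eapply Rle_trans; [apply Rabs_triang|]. assert (C * d^2 <= C * d) by (apply Rmult_le_compat_l; auto). lra. }
  assert (HeZ : Rabs e <= Z0 / 2) by lra.
  apply Rabs_le_inv_ in HeZ.
  assert (Hden : Z0 / 2 <= Z0 + e) by lra.
  set (N := rM * Z0 ^ 2 - M * Z0 * rZ - m1 * Z0 * e + M * z1 * e).
  replace ((M + m1 + rM) / (Z0 + z1 + rZ) - M / Z0 - (m1 / Z0 - M / Z0 * (z1 / Z0))) with
    (N / (Z0 ^ 2 * (Z0 + e))).
  2:{ unfold N, e. unfold e in Hden. field. repeat split; lra. }
  set (W := C * Z0 ^ 2 + Mb * Z0 * C + A * Z0 * (A + C) + Mb * A * (A + C)).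
  assert (HN : Rabs N <= d ^ 2 * W).
  { unfold N, W.
    assert (t1 : Rabs (rM * Z0 ^ 2) <= C * d^2 * Z0^2).
    { rewrite Rabs_mult, (Rabs_right (Z0^2)); [|apply Rle_ge, pow_le; lra]. apply Rmult_le_compat_r; [apply pow_le; lra|auto]. }
    assert (t2 : Rabs (M * Z0 * rZ) <= Mb * Z0 * (C * d^2)).
    { rewrite !Rabs_mult, (Rabs_right M), (Rabs_right Z0); try lra.
      apply Rmult_le_compat; try apply Rabs_pos; try apply Rmult_le_pos; try lra.
      apply Rmult_le_compat_r; lra. }
    assert (t3 : Rabs (m1 * Z0 * e) <= A * d * Z0 * ((A + C) * d)).
    { rewrite !Rabs_mult, (Rabs_right Z0); try lra.
      apply Rmult_le_compat; try apply Rabs_pos; try apply Rmult_le_pos; try apply Rabs_pos; try lra.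
      apply Rmult_le_compat_r; lra. }
    assert (t4 : Rabs (M * z1 * e) <= Mb * (A * d) * ((A + C) * d)).
    { rewrite !Rabs_mult, (Rabs_right M); try lra.
      apply Rmult_le_compat; try apply Rabs_pos; try apply Rmult_le_pos; try apply Rabs_pos; try lra.
      apply Rmult_le_compat; try apply Rabs_pos; lra. }
    apply Rabs_le_inv_ in t1, t2, t3, t4.
    replace (d ^ 2 * (C * Z0 ^ 2 + Mb * Z0 * C + A * Z0 * (A + C) + Mb * A * (A + C))) with
      (C * d^2 * Z0^2 + Mb * Z0 * (C * d^2) + A * d * Z0 * ((A + C) * d) + Mb * (A * d) * ((A + C) * d)) by ring.
    apply Rabs_le; split; lra. }
  assert (W0 : 0 <= W) by (unfold W; repeat apply Rplus_le_le_0_compat; repeat apply Rmult_le_pos; try apply pow_le; lra).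
  unfold Rdiv. rewrite Rabs_mult. rewrite Rabs_inv.
  rewrite (Rabs_right (Z0 ^ 2 * (Z0 + e))); [|apply Rle_ge, Rmult_le_pos; [apply pow_le|]; lra].
  assert (P3 : 0 < Z0 ^ 2 * (Z0 + e)) by (apply Rmult_lt_0_compat; [apply pow_lt|]; lra).
  assert (L : / (Z0 ^ 2 * (Z0 + e)) <= 2 * / Z0 ^ 3).
  { replace (2 * / Z0 ^ 3) with (/ (Z0^2 * (Z0/2))) by (field; lra).
    apply Rinv_le_contravar. apply Rmult_lt_0_compat; [apply pow_lt|]; lra.
    apply Rmult_le_compat_l; [apply pow_le|]; lra. }
  replace (d ^ 2 * (2 * W * / Z0 ^ 3)) with ((d^2 * W) * (2 * / Z0 ^ 3)) by ring.
  apply Rmult_le_compat; try apply Rabs_pos; try (left; apply Rinv_0_lt_compat; auto); auto.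
Qed.

Definition zk : nat -> nat := fun _ => 0%nat.
Lemma cfg_zk n : cfg n zk. Proof. intros i _; reflexivity. Qed.

Lemma sumR_nonneg m f : (forall j, (j < m)%nat -> 0 <= f j) -> 0 <= sumR m f.
Proof. induction m; simpl; intros H; [lra|]. assert (0 <= f m) by (apply H; lia).
  assert (0 <= sumR m f) by (apply IHm; intros; apply H; lia). lra. Qed.

Lemma sumR_ge_term m f j : (j < m)%nat -> (forall j, (j < m)%nat -> 0 <= f j) -> f j <= sumR m f.
Proof. induction m; intros Hj H; [lia|]. simpl. destruct (Nat.eq_dec j m) as [->|Hne].
  assert (0 <= sumR m f) by (apply sumR_nonneg; intros; apply H; lia). lra.
  assert (f j <= sumR m f) by (apply IHm; [lia|intros; apply H; lia]). assert (0 <= f m) by (apply H; lia). lra. Qed.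

Lemma sumR_abs_bound m f b : (forall j, (j < m)%nat -> Rabs (f j) <= b) -> Rabs (sumR m f) <= INR m * b.
Proof. induction m; intros H. simpl. rewrite Rabs_R0; lra.
  rewrite S_INR. simpl. eapply Rle_trans; [apply Rabs_triang|].
  assert (Rabs (sumR m f) <= INR m * b) by (apply IHm; intros; apply H; lia).
  assert (Rabs (f m) <= b) by (apply H; lia). lra. Qed.

Section Dom.
Variable n : nat.
Variable g : nat -> (nat -> nat) -> R.
Hypothesis Hzr : zr_rates g n.

Lemma dom_pos phi : in_fug_domain g n phi -> forall j, (j < n)%nat -> 0 < phi j.
Proof. intros [H _]; auto. Qed.

Lemma dom_summable phi : in_fug_domain g n phi -> summable n (weight g n phi).
Proof. intros [Hp [e [He H]]]. destruct (H phi) as [s Hs]. intros i Hi; split; auto.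
  rewrite Rminus_diag, Rabs_R0; auto. exists s; auto. Qed.

Lemma Z_pos phi : (forall j, (j < n)%nat -> 0 < phi j) -> summable n (weight g n phi) -> 0 < Zpart g n phi.
Proof. intros Hp S. unfold Zpart. apply Rlt_le_trans with (lsum (weight g n phi) (zk :: nil)).
  simpl. rewrite Rplus_0_r. apply weight_pos; auto.
  apply lsum_le_tsum; [intros k _; left; apply weight_pos; auto|auto| |].
  constructor; [simpl; tauto|constructor]. constructor; [apply cfg_zk|constructor]. Qed.

Lemma pow5_bound y : 0 <= y <= 1 -> (1 + y) ^ 5 - 1 <= 31 * y.
Proof. intros H. replace ((1+y)^5 - 1) with (y * (5 + 10*y + 10*y^2 + 5*y^3 + y^4)) by ring.
  assert (y^2 <= 1) by (simpl; nra). assert (y^3 <= 1) by (simpl; nra). assert (y^4 <= 1) by (simpl; nra).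
  assert (5 + 10*y + 10*y^2 + 5*y^3 + y^4 <= 31) by lra. nra. Qed.

Lemma exists_y phi0 : in_fug_domain g n phi0 -> exists y, (0 < y <= 1) /\ summable n (Bw n g phi0 y).
Proof.
  intros Hd. destruct Hd as [Hp [e [He H]]].
  set (P := 1 + sumR n phi0).
  assert (HP : 1 <= P) by (unfold P; assert (0 <= sumR n phi0) by (apply sumR_nonneg; intros; left; auto); lra).
  set (y := Rmin 1 (e / (32 * P))).
  assert (ey : 0 < e / (32 * P)) by (apply Rdiv_lt_0_compat; lra).
  assert (Hy : 0 < y <= 1) by (unfold y; split; [apply Rmin_glb_lt; lra|apply Rmin_l]).
  exists y; split; auto.
  set (psi := fun j => phi0 j * (1 + ((1 + y)^5 - 1))).
  destruct (H psi) as [s Hs].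
  { intros i Hi. unfold psi. split.
    - apply Rmult_lt_0_compat; auto. assert (1 <= (1+y)^5) by (apply pow_ge1; lra). lra.
    - replace (phi0 i * (1 + ((1 + y) ^ 5 - 1)) - phi0 i) with (phi0 i * ((1+y)^5 - 1)) by ring.
      assert (1 <= (1+y)^5) by (apply pow_ge1; lra).
      rewrite Rabs_right; [|apply Rle_ge, Rmult_le_pos; [left; auto|lra]].
      assert (phi0 i <= P) by (unfold P; assert (phi0 i <= sumR n phi0) by (apply sumR_ge_term; auto; intros; left; auto); lra).
      assert ((1+y)^5 - 1 <= 31 * y) by (apply pow5_bound; lra).
      assert (y <= e / (32 * P)) by apply Rmin_r.
      assert (phi0 i * ((1+y)^5 - 1) <= P * (31 * y)) by (apply Rmult_le_compat; try lra; left; auto).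
      assert (Hq : P * (31 * y) <= P * (31 * (e / (32 * P)))) by (apply Rmult_le_compat_l; lra).
      replace (P * (31 * (e / (32 * P)))) with (31 / 32 * e) in Hq by (field; apply Rgt_not_eq; lra). lra. }
  exists s. eapply HasSum_ext; [|exact Hs]. intros k Hk. unfold Bw.
  rewrite (weight_scale n g phi0 psi (fun _ => (1 + y)^5 - 1) k); [|intros; reflexivity].
  f_equal. replace (1 + ((1 + y) ^ 5 - 1)) with ((1+y)^5) by ring.
  rewrite prodR_const. rewrite pow_mult. auto.
Qed.

Variable phi0 : nat -> R.
Hypothesis Hdom : in_fug_domain g n phi0.

Definition Gam0 i j := expect g n phi0 (fun k => INR (k i) * INR (k j)) - density g n phi0 i * density g n phi0 j.

Lemma dens_exp : exists K d1, 0 < d1 /\ 0 <= K /\ forall psi de d,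
  (forall j, (j < n)%nat -> psi j = phi0 j * (1 + de j)) ->
  (forall j, (j < n)%nat -> Rabs (de j) <= d) -> 0 <= d <= d1 ->
  summable n (weight g n psi) /\
  forall i, (i < n)%nat ->
  Rabs (density g n psi i - density g n phi0 i - sumR n (fun j => Gam0 i j * de j)) <= K * d ^ 2.
Proof.
  destruct (exists_y phi0 Hdom) as [y [Hy HB]].
  assert (Hp := dom_pos phi0 Hdom).
  set (TB := tsum n (Bw n g phi0 y)).
  assert (TB0 : 0 <= TB) by (apply tsum_nonneg; auto; apply Bw_nneg; auto).
  set (Z0 := Zpart g n phi0).
  assert (HZ : 0 < Z0) by (apply Z_pos; auto; apply dom_summable; auto).
  set (b := 2 / y ^ 2 * TB).
  assert (b0 : 0 <= b) by (unfold b; apply Rmult_le_pos; auto; unfold Rdiv; apply Rmult_le_pos; [lra|left; apply Rinv_0_lt_compat, pow_lt; lra]).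
  set (C := 2 / y ^ 3 * TB).
  assert (C0 : 0 <= C) by (unfold C; apply Rmult_le_pos; auto; unfold Rdiv; apply Rmult_le_pos; [lra|left; apply Rinv_0_lt_compat, pow_lt; lra]).
  set (A := INR n * b).
  assert (A0 : 0 <= A) by (unfold A; apply Rmult_le_pos; auto; apply pos_INR).
  set (K := 2 * (C * Z0 ^ 2 + b * Z0 * C + A * Z0 * (A + C) + b * A * (A + C)) / Z0 ^ 3).
  assert (K0 : 0 <= K).
  { unfold K. unfold Rdiv. apply Rmult_le_pos; [|left; apply Rinv_0_lt_compat, pow_lt; lra].
    apply Rmult_le_pos; [lra|].
    assert (Gen : forall a bb c z, 0<=a->0<=bb->0<=c->0<=z -> 0 <= c*z^2 + bb*z*c + a*z*(a+c) + bb*a*(a+c)).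
    { intros a bb c z H1 H2 H3 H4. assert (0 <= z^2) by (apply pow_le; lra).
      repeat apply Rplus_le_le_0_compat; repeat apply Rmult_le_pos; lra. }
    apply Gen; lra. }
  set (d1 := Rmin (y / 2) (Z0 / (2 * (A + C) + 1))).
  assert (d1p : 0 < d1) by (unfold d1; apply Rmin_glb_lt; apply Rdiv_lt_0_compat; lra).
  exists K, d1. split; auto. split; auto.
  intros psi de d Hpsi Hde Hd.
  assert (dy2 : d <= y / 2) by (eapply Rle_trans; [apply Hd|apply Rmin_l]).
  assert (dy : d <= y) by lra.
  assert (HF1 : forall k, cfg n k -> 0 <= (fun _ : nat -> nat => 1) k <= 1 + INR (sizek n k)).
  { intros; simpl; assert (0 <= INR (sizek n k)) by apply pos_INR; lra. }
  destruct (expansion n g Hzr phi0 Hp y Hy HB _ HF1 psi de d Hpsi Hde (conj (proj1 Hd) dy)) as [S1 E1].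
  assert (Ppos : forall j, (j < n)%nat -> 0 < psi j).
  { intros j Hj. rewrite Hpsi; auto. apply Rmult_lt_0_compat; auto.
    specialize (Hde j Hj). apply Rabs_le_inv_ in Hde. lra. }
  split. { apply summable_le with (fun k => 1 * weight g n psi k); [intros kk _; left; apply weight_pos; auto | intros kk Hk; lra | exact S1]. }
  intros i Hi.
  assert (HFi : forall k, cfg n k -> 0 <= (fun k => INR (k i)) k <= 1 + INR (sizek n k)).
  { intros k Hk; simpl; split; [apply pos_INR|]. assert (INR (k i) <= INR (sizek n k)) by (apply INR_kj_le; auto). lra. }
  destruct (expansion n g Hzr phi0 Hp y Hy HB _ HFi psi de d Hpsi Hde (conj (proj1 Hd) dy)) as [S2 E2].
  set (Zp := tsum n (fun k => 1 * weight g n psi k)) in *.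
  set (Z0' := tsum n (fun k => 1 * weight g n phi0 k)) in *.
  assert (EZ0 : Z0' = Z0) by (apply tsum_ext; intros; ring).
  set (z1 := sumR n (fun j => de j * tsum n (fun k => 1 * INR (k j) * weight g n phi0 k))) in *.
  set (Mp := tsum n (fun k => INR (k i) * weight g n psi k)) in *.
  set (M := tsum n (fun k => INR (k i) * weight g n phi0 k)) in *.
  set (m1 := sumR n (fun j => de j * tsum n (fun k => INR (k i) * INR (k j) * weight g n phi0 k))) in *.
  assert (Hb : forall F, (forall k, cfg n k -> 0 <= F k <= 1 + INR (sizek n k)) -> forall j, (j < n)%nat ->
     0 <= tsum n (fun k => F k * INR (k j) * weight g n phi0 k) <= b).
  { intros F HF j Hj. split.
    - apply tsum_nonneg. intros k Hk. destruct (HF k Hk). assert (0 <= INR (k j)) by apply pos_INR.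
      assert (0 < weight g n phi0 k) by (apply weight_pos; auto). apply Rmult_le_pos; [apply Rmult_le_pos|]; lra.
      apply (summable_Fj n g Hzr phi0 Hp y Hy HB F HF j Hj).
    - unfold b. unfold TB. rewrite <- (tsum_scal n (2 / y ^ 2) (Bw n g phi0 y)); auto. apply tsum_le.
      intros k Hk. destruct (HF k Hk). assert (0 <= INR (k j)) by apply pos_INR.
      assert (0 < weight g n phi0 k) by (apply weight_pos; auto). apply Rmult_le_pos; [apply Rmult_le_pos|]; lra.
      intros k Hk; apply (bound_b n g Hzr phi0 Hp y Hy F HF); auto.
      apply summable_scal; auto. unfold Rdiv; apply Rmult_le_pos; [lra|left; apply Rinv_0_lt_compat, pow_lt; lra].
      unfold Rdiv; apply Rmult_le_pos; [lra|left; apply Rinv_0_lt_compat, pow_lt; lra]. }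
  assert (Hz1 : Rabs z1 <= A * d).
  { unfold z1, A. replace (INR n * b * d) with (INR n * (d * b)) by ring. apply sumR_abs_bound.
    intros j Hj. rewrite Rabs_mult. destruct (Hb _ HF1 j Hj). rewrite (Rabs_right (tsum _ _)); [|lra].
    apply Rmult_le_compat; try apply Rabs_pos; try lra; auto. }
  assert (Hm1 : Rabs m1 <= A * d).
  { unfold m1, A. replace (INR n * b * d) with (INR n * (d * b)) by ring. apply sumR_abs_bound.
    intros j Hj. rewrite Rabs_mult. destruct (Hb _ HFi j Hj). rewrite (Rabs_right (tsum _ _)); [|lra].
    apply Rmult_le_compat; try apply Rabs_pos; try lra; auto. }
  assert (HM : 0 <= M <= b).
  { assert (EM : M = tsum n (fun k => 1 * INR (k i) * weight g n phi0 k)) by (apply tsum_ext; intros; ring).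
    rewrite EM. apply Hb; auto. }
  assert (Hd1 : d <= Z0 / (2 * (A + C) + 1)) by (eapply Rle_trans; [apply Hd|apply Rmin_r]).
  assert (Hs : (A + C) * d <= Z0 / 2).
  { apply Rle_trans with ((A + C) * (Z0 / (2 * (A + C) + 1))). apply Rmult_le_compat_l; lra.
    unfold Rdiv. rewrite <- Rmult_assoc. apply Rmult_le_reg_r with (2 * (A + C) + 1); [lra|].
    rewrite Rmult_assoc, Rinv_l; [|lra]. nra. }
  assert (Q := quot_exp Z0 M b A C d z1 m1 (Zp - Z0 - z1) (Mp - M - m1) HZ HM A0 C0
    (conj (proj1 Hd) (Rle_trans _ _ _ dy (proj2 Hy))) Hz1 Hm1).
  rewrite <- EZ0 in Q. replace (Z0' + z1 + (Zp - Z0' - z1)) with Zp in Q by ring.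
  replace (M + m1 + (Mp - M - m1)) with Mp in Q by ring.
  rewrite EZ0 in Q.
  assert (EZp : Zp = Zpart g n psi) by (apply tsum_ext; intros; ring).
  rewrite EZp in Q.
  replace (K * d ^ 2) with (d ^ 2 * (2 * (C * Z0 ^ 2 + b * Z0 * C + A * Z0 * (A + C) + b * A * (A + C)) / Z0 ^ 3)) by (unfold K; ring).
  replace (density g n psi i - density g n phi0 i - sumR n (fun j => Gam0 i j * de j)) with
    (Mp / Zpart g n psi - M / Z0 - (m1 / Z0 - M / Z0 * (z1 / Z0))).
  apply Q.
  - rewrite <- EZ0, <- EZp. unfold C. replace (2 / y^3 * TB * d^2) with (d^2 * (2 / y^3) * TB) by ring. exact E1.
  - unfold C. replace (2 / y^3 * TB * d^2) with (d^2 * (2 / y^3) * TB) by ring. exact E2.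
  - auto.
  - unfold density, expect. fold Z0 Mp M. unfold Gam0, density, expect. fold Z0 M.
    unfold m1, z1. f_equal. f_equal. 
    transitivity (sumR n (fun j => / Z0 * (de j * tsum n (fun k => INR (k i) * INR (k j) * weight g n phi0 k))
       - (M / Z0 * / Z0) * (de j * tsum n (fun k => 1 * INR (k j) * weight g n phi0 k)))).
    + rewrite sumR_minus, !sumR_scal. field. lra.
    + symmetry. apply sumR_ext; intros j Hj.
      assert (E3 : tsum n (fun k => 1 * INR (k j) * weight g n phi0 k) = tsum n (fun k => INR (k j) * weight g n phi0 k)) by (apply tsum_ext; intros; ring).
      rewrite E3. unfold Zpart in *. fold Z0. field. lra.
Qed.

End Dom.

Definition ek (i : nat) : nat -> nat := fun m => if Nat.eqb m i then 1%nat else 0%nat.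
Lemma cfg_ek n i : (i < n)%nat -> cfg n (ek i).
Proof. intros Hi m Hm. unfold ek. destruct (Nat.eqb_spec m i); lia. Qed.
Lemma ek_i i : ek i i = 1%nat. Proof. unfold ek; rewrite Nat.eqb_refl; auto. Qed.
Lemma ek_j i j : j <> i -> ek i j = 0%nat. Proof. intros H; unfold ek; destruct (Nat.eqb_spec j i); lia. Qed.

Section Basic.
Variable n : nat.
Variable g : nat -> (nat -> nat) -> R.
Hypothesis Hzr : zr_rates g n.
Hypothesis Hinv : INV g n.

Lemma expect_g psi i : (i < n)%nat -> (forall j, (j < n)%nat -> 0 < psi j) -> summable n (weight g n psi) ->
  expect g n psi (g i) = psi i.
Proof.
  intros Hi Hp S. unfold expect.
  assert (HZ := Z_pos n g Hzr psi Hp S).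
  rewrite (tsum_ext n _ (fun k => if Nat.ltb 0 (k i) then psi i * weight g n psi (dec k i) else 0)).
  2:{ intros k Hk. apply g_weight; auto. }
  rewrite (tsum_eq n _ (psi i * tsum n (weight g n psi))).
  unfold Zpart. unfold Zpart in HZ. field. lra.
  apply (HasSum_shift n (fun k => psi i * weight g n psi k)); auto. intros k Hk. apply Rmult_le_pos; [left; auto|left; apply weight_pos; auto].
  apply HasSum_scal. left; auto. apply tsum_spec; auto.
Qed.

Variable phi0 : nat -> R.
Hypothesis Hdom : in_fug_domain g n phi0.

Lemma Gam0_pos i : (i < n)%nat -> 0 < Gam0 n g phi0 i i.
Proof.
  intros Hi.
  assert (Hp := dom_pos n g phi0 Hdom).
  assert (S0 := dom_summable n g phi0 Hdom).
  assert (HZ := Z_pos n g Hzr phi0 Hp S0).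
  destruct (exists_y n g phi0 Hdom) as [y [Hy HB]].
  assert (HFi : forall k, cfg n k -> 0 <= (fun k => INR (k i)) k <= 1 + INR (sizek n k)).
  { intros k Hk; simpl; split; [apply pos_INR|]. assert (INR (k i) <= INR (sizek n k)) by (apply INR_kj_le; auto). lra. }
  assert (SQ := summable_Fj n g Hzr phi0 Hp y Hy HB _ HFi i Hi). simpl in SQ.
  assert (HF1 : forall k, cfg n k -> 0 <= (fun _ : nat -> nat => 1) k <= 1 + INR (sizek n k)).
  { intros; simpl; assert (0 <= INR (sizek n k)) by apply pos_INR; lra. }
  assert (SM' := summable_Fj n g Hzr phi0 Hp y Hy HB _ HF1 i Hi). simpl in SM'.
  assert (SM : summable n (fun k => INR (k i) * weight g n phi0 k)).
  { apply summable_le with (fun k => 1 * INR (k i) * weight g n phi0 k); [|intros k Hk; right; ring|exact SM']. intros k _.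
    apply Rmult_le_pos; [apply pos_INR|left; apply weight_pos; auto]. }
  set (Z0 := Zpart g n phi0) in *.
  set (a := density g n phi0 i).
  assert (Ha : a = tsum n (fun k => INR (k i) * weight g n phi0 k) / Z0) by reflexivity.
  assert (a0 : 0 <= a).
  { rewrite Ha. apply Rmult_le_pos; [|left; apply Rinv_0_lt_compat; auto].
    apply tsum_nonneg; auto. intros k _. apply Rmult_le_pos; [apply pos_INR|left; apply weight_pos; auto]. }
  set (V := fun k => (INR (k i) - a) ^ 2 * weight g n phi0 k).
  assert (PV : nneg n V) by (intros k _; unfold V; apply Rmult_le_pos; [apply pow2_ge_0|left; apply weight_pos; auto]).
  assert (PQ : nneg n (fun k => INR (k i) * INR (k i) * weight g n phi0 k)).
  { intros k _. assert (0 <= INR (k i)) by apply pos_INR. apply Rmult_le_pos; [nra|left; apply weight_pos; auto]. }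
  assert (Pw : nneg n (weight g n phi0)) by (intros k _; left; apply weight_pos; auto).
  assert (Pa2 : nneg n (fun k => a ^ 2 * weight g n phi0 k)) by (intros k Hk; apply Rmult_le_pos; [apply pow2_ge_0|apply Pw; auto]).
  assert (Sa2 : summable n (fun k => a ^ 2 * weight g n phi0 k)) by (apply summable_scal; auto; apply pow2_ge_0).
  assert (SV : summable n V).
  { apply summable_le with (fun k => INR (k i) * INR (k i) * weight g n phi0 k + a ^ 2 * weight g n phi0 k); auto.
    intros k Hk. unfold V. assert (0 <= INR (k i)) by apply pos_INR. assert (w := weight_pos n g Hzr phi0 k Hp).
    replace (INR (k i) * INR (k i) * weight g n phi0 k + a ^ 2 * weight g n phi0 k) with ((INR (k i) * INR (k i) + a^2) * weight g n phi0 k) by ring.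
    apply Rmult_le_compat_r; [lra|]. simpl. nra.
    apply summable_plus; auto. }
  assert (PM : nneg n (fun k => 2 * a * (INR (k i) * weight g n phi0 k))).
  { intros k _. apply Rmult_le_pos; [lra|]. apply Rmult_le_pos; [apply pos_INR|left; apply weight_pos; auto]. }
  assert (SM2 : summable n (fun k => 2 * a * (INR (k i) * weight g n phi0 k))) by (apply summable_scal; auto; lra).
  assert (E : tsum n (fun k => V k + 2 * a * (INR (k i) * weight g n phi0 k)) =
              tsum n (fun k => INR (k i) * INR (k i) * weight g n phi0 k + a ^ 2 * weight g n phi0 k)).
  { apply tsum_ext. intros k _. unfold V. ring. }
  rewrite tsum_plus, tsum_plus, tsum_scal, tsum_scal in E; auto; try lra; try apply pow2_ge_0.
  assert (HV : 0 < tsum n V).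
  { apply Rlt_le_trans with (lsum V (zk :: ek i :: nil)).
    - simpl. unfold V. rewrite ek_i. unfold zk at 1. simpl INR.
      assert (w1 := weight_pos n g Hzr phi0 zk Hp). assert (w2 := weight_pos n g Hzr phi0 (ek i) Hp).
      destruct (Req_dec a 0) as [->|Hna].
      + replace ((1 - 0) ^ 2) with 1 by ring. nra.
      + assert (0 < (0 - a)^2) by (apply pow2_gt_0; lra) || (simpl; nra).
        assert (0 <= (1 - a)^2) by apply pow2_ge_0. nra.
    - apply lsum_le_tsum; auto.
      + constructor. simpl. intros [H|H]; [|auto]. assert (zk i = ek i i) by (rewrite H; auto).
        rewrite ek_i in H0. unfold zk in H0. lia. constructor; [simpl; auto|constructor].
      + constructor; [apply cfg_zk|constructor; [apply cfg_ek; auto|constructor]]. }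
  assert (HMt : tsum n (fun k => INR (k i) * weight g n phi0 k) = a * Z0) by (rewrite Ha; field; lra).
  rewrite HMt in E. change (tsum n (weight g n phi0)) with Z0 in E.
  assert (EV : tsum n V = tsum n (fun k => INR (k i) * INR (k i) * weight g n phi0 k) - a ^ 2 * Z0).
  { replace (2 * a * (a * Z0)) with (2 * (a^2 * Z0)) in E by ring. lra. }
  unfold Gam0. fold a. unfold expect. fold Z0.
  replace (tsum n (fun k => INR (k i) * INR (k i) * weight g n phi0 k) / Z0 - a * a) with (tsum n V / Z0).
  apply Rdiv_lt_0_compat; auto.
  rewrite EV. field. lra.
Qed.
End Basic.

Lemma exp_pow x m : exp x ^ m = exp (INR m * x).
Proof. induction m. simpl. rewrite Rmult_0_l, exp_0; auto.
  rewrite S_INR. simpl. rewrite IHm, <- exp_plus. f_equal; ring. Qed.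

Lemma prodR_exp m (x : nat -> R) (k : nat -> nat) :
  prodR m (fun j => exp (x j) ^ k j) = exp (sumR m (fun j => INR (k j) * x j)).
Proof. induction m; simpl. rewrite exp_0; auto. rewrite IHm, exp_pow, exp_plus; auto. Qed.

Lemma lsum_sumR {T} m (F : nat -> T -> R) l :
  lsum (fun k => sumR m (fun j => F j k)) l = sumR m (fun j => lsum (F j) l).
Proof. induction l; simpl. clear. induction m; simpl; [auto|rewrite <- IHm; ring].
  rewrite IHl. rewrite <- sumR_plus. auto. Qed.

Lemma exp_L_ineq L : L ^ 2 / (1 + Rabs L) <= (exp L - 1) * L.
Proof.
  assert (H1 := exp_ineq1_le L). assert (H2 := exp_ineq1_le (- L)).
  assert (P := exp_pos L). rewrite exp_Ropp in H2.
  destruct (Rle_dec 0 L).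
  - rewrite Rabs_right; [|lra]. apply Rmult_le_reg_r with (1 + L); [lra|].
    unfold Rdiv. rewrite Rmult_assoc, Rinv_l; [|lra]. nra.
  - rewrite Rabs_left; [|lra].
    assert (1 - exp L >= - L / (1 - L)).
    { assert ((1 - L) * exp L <= 1).
      { apply Rmult_le_reg_r with (/ exp L). apply Rinv_0_lt_compat; auto.
        rewrite Rmult_assoc, Rinv_r; lra. }
      apply Rle_ge. apply Rmult_le_reg_r with (1 - L); [lra|]. unfold Rdiv. rewrite Rmult_assoc, Rinv_l; lra. }
    apply Rmult_le_reg_r with (1 - L); [lra|]. replace (1 + - L) with (1 - L) by ring.
    unfold Rdiv. rewrite Rmult_assoc, Rinv_l; [|lra].
    unfold Rdiv in H. assert (- L * / (1 - L) * (1 - L) = - L) by (field; lra).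
    nra.
Qed.

Lemma exp_small D : Rabs D <= 1/2 -> Rabs (exp D - 1) <= 2 * Rabs D.
Proof.
  intros H. assert (H1 := exp_ineq1_le D). assert (H2 := exp_ineq1_le (- D)).
  assert (P := exp_pos D). rewrite exp_Ropp in H2.
  apply Rabs_le_inv_ in H.
  destruct (Rle_dec 0 D).
  - rewrite Rabs_right with (r := D); [|lra]. rewrite Rabs_right; [|lra].
    assert ((1 - D) * exp D <= 1).
    { apply Rmult_le_reg_r with (/ exp D). apply Rinv_0_lt_compat; auto.
      rewrite Rmult_assoc, Rinv_r; lra. }
    nra.
  - assert (exp D < 1) by (rewrite <- exp_0; apply exp_increasing; lra).
    rewrite Rabs_left with (r := D); [|lra]. rewrite Rabs_left1; [|lra]. lra.
Qed.

Fixpoint minR (m : nat) (f : nat -> R) : R :=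
  match m with O => 1 | S m' => Rmin (minR m' f) (f m') end.
Lemma minR_pos m f : (forall j, (j < m)%nat -> 0 < f j) -> 0 < minR m f.
Proof. induction m; simpl; intros H; [lra|]. apply Rmin_glb_lt; [apply IHm; intros; apply H; lia|apply H; lia]. Qed.
Lemma minR_le m f j : (j < m)%nat -> minR m f <= f j.
Proof. induction m; simpl; intros H; [lia|]. destruct (Nat.eq_dec j m) as [->|Hne]. apply Rmin_r.
  eapply Rle_trans; [apply Rmin_l|]. apply IHm; lia. Qed.

Lemma sumR_ek_mult m i (x : nat -> R) : (i < m)%nat -> sumR m (fun j => INR (ek i j) * x j) = x i.
Proof. induction m; intros H; [lia|]. simpl. destruct (Nat.eq_dec i m) as [->|Hne].
  - rewrite ek_i. replace (sumR m (fun j => INR (ek m j) * x j)) with 0. simpl; ring.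
    clear. symmetry. assert (forall p, (p <= m)%nat -> sumR p (fun j => INR (ek m j) * x j) = 0).
    { induction p; simpl; intros; auto. rewrite IHp; [|lia]. rewrite ek_j; [simpl; ring|lia]. }
    apply H; lia.
  - rewrite IHm; [|lia]. rewrite ek_j; [simpl; ring|lia]. Qed.

Lemma sumR_zk_mult m (x : nat -> R) : sumR m (fun j => INR (zk j) * x j) = 0.
Proof. induction m; [reflexivity|]. change (sumR (S m) (fun j => INR (zk j) * x j)) with (sumR m (fun j => INR (zk j) * x j) + INR (zk m) * x m). rewrite IHm. unfold zk; simpl; ring. Qed.

Lemma lsum_map_ek (f : (nat -> nat) -> R) m : lsum f (map ek (seq 0 m)) = sumR m (fun i => f (ek i)).
Proof. induction m; [reflexivity|]. rewrite seq_S, map_app, lsum_app, IHm. simpl. ring. Qed.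

Lemma pigeon m (u : nat -> R) b : INR m * b < sumR m u -> exists i, (i < m)%nat /\ b < u i.
Proof.
  intros H. destruct (classic (exists i, (i < m)%nat /\ b < u i)) as [E|E]; auto. exfalso.
  assert (sumR m u <= INR m * b).
  { clear H. induction m. simpl; lra. rewrite S_INR. simpl.
    assert (u m <= b). { destruct (Rle_dec (u m) b); auto. exfalso; apply E; exists m; split; [lia|lra]. }
    assert (sumR m u <= INR m * b). apply IHm. intros [i [Hi Hb]]. apply E. exists i; split; [lia|auto]. lra. }
  lra.
Qed.

Section KL.
Variable n : nat.
Variable g : nat -> (nat -> nat) -> R.
Hypothesis Hzr : zr_rates g n.

Lemma dom_summable_kj phi j : in_fug_domain g n phi -> (j < n)%nat ->
  summable n (fun k => INR (k j) * weight g n phi k).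
Proof.
  intros Hd Hj. destruct (exists_y n g phi Hd) as [y [Hy HB]].
  assert (Hp := dom_pos n g phi Hd).
  assert (HF1 : forall k, cfg n k -> 0 <= (fun _ : nat -> nat => 1) k <= 1 + INR (sizek n k)).
  { intros; simpl; assert (0 <= INR (sizek n k)) by apply pos_INR; lra. }
  assert (S := summable_Fj n g Hzr phi Hp y Hy HB _ HF1 j Hj). simpl in S.
  apply summable_le with (fun k => 1 * INR (k j) * weight g n phi k); [|intros k Hk; right; ring|exact S].
  intros k _. apply Rmult_le_pos; [apply pos_INR|left; apply weight_pos; auto].
Qed.

Lemma comp_tail f G L : nneg n f -> (forall k, cfg n k -> f k <= G k) -> summable n G ->
  NoDup L -> Forall (cfg n) L -> 0 <= tsum n f - lsum f L <= tsum n G - lsum G L.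
Proof.
  intros Pf Le SG N F.
  assert (Sf : summable n f) by (eapply summable_le; eauto).
  set (h := fun k => G k - f k).
  assert (Ph : nneg n h) by (intros k Hk; unfold h; specialize (Le k Hk); lra).
  assert (Sh : summable n h).
  { apply summable_le with G; auto. intros k Hk; unfold h; specialize (Pf k Hk); lra. }
  assert (E1 : tsum n G = tsum n f + tsum n h).
  { rewrite <- tsum_plus; auto. apply tsum_ext; intros; unfold h; ring. }
  assert (E2 : lsum G L = lsum f L + lsum h L).
  { rewrite <- lsum_plus. apply lsum_ext; intros; unfold h; ring. }
  assert (lsum h L <= tsum n h) by (apply lsum_le_tsum; auto).
  assert (lsum f L <= tsum n f) by (apply lsum_le_tsum; auto).
  lra.
Qed.

Lemma tail_exists G eps : nneg n G -> summable n G -> 0 < eps -> forall l0, NoDup l0 -> Forall (cfg n) l0 ->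
  exists L, NoDup L /\ Forall (cfg n) L /\ incl l0 L /\ tsum n G - lsum G L < eps.
Proof.
  intros PG SG He l0 N0 F0.
  destruct (HasSum_approx n G (tsum n G) eps (tsum_spec n G SG) He) as [l [N [F Hl]]].
  destruct (merge_lists _ _ _ F F0) as [L [NL [FL [I1 I2]]]].
  exists L; split; auto; split; auto; split; auto.
  assert (lsum G l <= lsum G L).
  { apply lsum_incl_le; auto. intros x Hx; apply PG; eapply Forall_forall; eauto. }
  lra.
Qed.

Variable phi0 psi : nat -> R.
Hypothesis Hd0 : in_fug_domain g n phi0.
Hypothesis Hd1 : in_fug_domain g n psi.

Let Hp0 := dom_pos n g phi0 Hd0.
Let Hp1 := dom_pos n g psi Hd1.
Let S0 := dom_summable n g phi0 Hd0.
Let S1 := dom_summable n g psi Hd1.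
Let HZ0 := Z_pos n g Hzr phi0 Hp0 S0.
Let HZ1 := Z_pos n g Hzr psi Hp1 S1.

Definition pp k := weight g n psi k / Zpart g n psi.
Definition qq k := weight g n phi0 k / Zpart g n phi0.
Definition Del j := ln (psi j / phi0 j).
Definition cc := ln (Zpart g n psi / Zpart g n phi0).
Definition LL k := sumR n (fun j => INR (k j) * Del j) - cc.
Definition TT k := (pp k - qq k) * LL k.

Lemma pp_eq k : pp k = qq k * exp (LL k).
Proof.
  unfold pp, qq, LL. rewrite (weight_scale n g phi0 psi (fun j => psi j / phi0 j - 1) k).
  2:{ intros j Hj. assert (0 < phi0 j) by (apply Hp0; auto). field. lra. }
  rewrite (prodR_ext n _ (fun j => exp (Del j) ^ k j)).
  2:{ intros j Hj. unfold Del. rewrite exp_ln. f_equal. ring.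
      apply Rdiv_lt_0_compat; [apply Hp1|apply Hp0]; auto. }
  rewrite prodR_exp. set (SS := sumR n (fun j => INR (k j) * Del j)). change (SS - cc) with (SS + - cc). rewrite exp_plus, exp_Ropp. unfold cc. rewrite exp_ln.
  2:{ apply Rdiv_lt_0_compat; auto. }
  field. split; lra.
Qed.

Lemma qq_pos k : 0 < qq k.
Proof. unfold qq. apply Rdiv_lt_0_compat; auto. apply weight_pos; auto. Qed.

Lemma TT_lower k : qq k * (LL k ^ 2 / (1 + Rabs (LL k))) <= TT k.
Proof.
  unfold TT. rewrite pp_eq. replace ((qq k * exp (LL k) - qq k) * LL k) with (qq k * ((exp (LL k) - 1) * LL k)) by ring.
  apply Rmult_le_compat_l. left; apply qq_pos. apply exp_L_ineq.
Qed.

Lemma TT_nneg k : 0 <= TT k.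
Proof. eapply Rle_trans; [|apply TT_lower]. apply Rmult_le_pos. left; apply qq_pos.
  unfold Rdiv. apply Rmult_le_pos; [apply pow2_ge_0|]. left; apply Rinv_0_lt_compat.
  assert (0 <= Rabs (LL k)) by apply Rabs_pos. lra. Qed.

Lemma key_ineq l0 : NoDup l0 -> Forall (cfg n) l0 ->
  lsum TT l0 <= sumR n (fun j => Del j * (density g n psi j - density g n phi0 j)).
Proof.
  intros N0 F0.
  set (PJ := fun j k => INR (k j) * pp k).
  set (QJ := fun j k => INR (k j) * qq k).
  set (G := fun k => pp k + qq k + sumR n (fun j => PJ j k + QJ j k)).
  assert (Ppp : nneg n pp) by (intros k _; unfold pp; left; apply Rdiv_lt_0_compat; auto; apply weight_pos; auto).
  assert (Pqq : nneg n qq) by (intros k _; left; apply qq_pos).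
  assert (PPJ : forall j, nneg n (PJ j)) by (intros j k Hk; unfold PJ; apply Rmult_le_pos; [apply pos_INR|apply Ppp; auto]).
  assert (PQJ : forall j, nneg n (QJ j)) by (intros j k Hk; unfold QJ; apply Rmult_le_pos; [apply pos_INR|apply Pqq; auto]).
  assert (Epp : forall k, pp k = / Zpart g n psi * weight g n psi k) by (intros; unfold pp, Rdiv; ring).
  assert (Eqq : forall k, qq k = / Zpart g n phi0 * weight g n phi0 k) by (intros; unfold qq, Rdiv; ring).
  assert (Spp : summable n pp).
  { apply summable_le with (fun k => / Zpart g n psi * weight g n psi k); auto.
    intros; rewrite Epp; lra. apply summable_scal; auto. left; apply Rinv_0_lt_compat; auto. }
  assert (Sqq : summable n qq).
  { apply summable_le with (fun k => / Zpart g n phi0 * weight g n phi0 k); auto.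
    intros; rewrite Eqq; lra. apply summable_scal; auto. left; apply Rinv_0_lt_compat; auto. }
  assert (EPJ : forall j k, PJ j k = / Zpart g n psi * (INR (k j) * weight g n psi k)) by (intros; unfold PJ, pp, Rdiv; ring).
  assert (EQJ : forall j k, QJ j k = / Zpart g n phi0 * (INR (k j) * weight g n phi0 k)) by (intros; unfold QJ, qq, Rdiv; ring).
  assert (SPJ : forall j, (j < n)%nat -> summable n (PJ j)).
  { intros j Hj. apply summable_le with (fun k => / Zpart g n psi * (INR (k j) * weight g n psi k)); auto.
    intros; rewrite EPJ; lra. apply summable_scal; [left; apply Rinv_0_lt_compat; auto|apply dom_summable_kj; auto]. }
  assert (SQJ : forall j, (j < n)%nat -> summable n (QJ j)).
  { intros j Hj. apply summable_le with (fun k => / Zpart g n phi0 * (INR (k j) * weight g n phi0 k)); auto.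
    intros; rewrite EQJ; lra. apply summable_scal; [left; apply Rinv_0_lt_compat; auto|apply dom_summable_kj; auto]. }
  destruct (tsum_sumR n n (fun j k => PJ j k + QJ j k)) as [PS [SS _]].
  { intros j Hj. split. intros k Hk. specialize (PPJ j k Hk). specialize (PQJ j k Hk). lra.
    apply summable_plus; auto. }
  assert (PG : nneg n G) by (intros k Hk; unfold G; specialize (Ppp k Hk); specialize (Pqq k Hk); specialize (PS k Hk); simpl in PS; lra).
  assert (SG : summable n G) by (unfold G; repeat apply summable_plus; auto; intros k Hk;
     try (specialize (Ppp k Hk); specialize (Pqq k Hk); lra); auto).
  assert (Tpp : tsum n pp = 1).
  { rewrite (tsum_ext n pp (fun k => / Zpart g n psi * weight g n psi k)); [|intros; apply Epp].
    rewrite tsum_scal; auto. change (tsum n (weight g n psi)) with (Zpart g n psi). change (tsum n (weight g n phi0)) with (Zpart g n phi0). field. lra. left; apply Rinv_0_lt_compat; auto. }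
  assert (Tqq : tsum n qq = 1).
  { rewrite (tsum_ext n qq (fun k => / Zpart g n phi0 * weight g n phi0 k)); [|intros; apply Eqq].
    rewrite tsum_scal; auto. change (tsum n (weight g n psi)) with (Zpart g n psi). change (tsum n (weight g n phi0)) with (Zpart g n phi0). field. lra. left; apply Rinv_0_lt_compat; auto. }
  assert (TPJ : forall j, (j < n)%nat -> tsum n (PJ j) = density g n psi j).
  { intros j Hj. rewrite (tsum_ext n (PJ j) (fun k => / Zpart g n psi * (INR (k j) * weight g n psi k))); [|intros; apply EPJ].
    rewrite tsum_scal; [|left; apply Rinv_0_lt_compat; auto|apply dom_summable_kj; auto].
    unfold density, expect, Rdiv. ring. }
  assert (TQJ : forall j, (j < n)%nat -> tsum n (QJ j) = density g n phi0 j).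
  { intros j Hj. rewrite (tsum_ext n (QJ j) (fun k => / Zpart g n phi0 * (INR (k j) * weight g n phi0 k))); [|intros; apply EQJ].
    rewrite tsum_scal; [|left; apply Rinv_0_lt_compat; auto|apply dom_summable_kj; auto].
    unfold density, expect, Rdiv. ring. }
  assert (LeG_pp : forall k, cfg n k -> pp k <= G k).
  { intros k Hk; unfold G; specialize (Pqq k Hk); specialize (PS k Hk); simpl in PS; lra. }
  assert (LeG_qq : forall k, cfg n k -> qq k <= G k).
  { intros k Hk; unfold G; specialize (Ppp k Hk); specialize (PS k Hk); simpl in PS; lra. }
  assert (LeG_PJ : forall j, (j < n)%nat -> forall k, cfg n k -> PJ j k <= G k).
  { intros j Hj k Hk. unfold G. specialize (Ppp k Hk); specialize (Pqq k Hk).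
    assert (PJ j k + QJ j k <= sumR n (fun j => PJ j k + QJ j k)).
    { apply (sumR_ge_term n (fun j => PJ j k + QJ j k) j Hj). intros j' Hj'.
      specialize (PPJ j' k Hk); specialize (PQJ j' k Hk); lra. }
    specialize (PQJ j k Hk). lra. }
  assert (LeG_QJ : forall j, (j < n)%nat -> forall k, cfg n k -> QJ j k <= G k).
  { intros j Hj k Hk. unfold G. specialize (Ppp k Hk); specialize (Pqq k Hk).
    assert (PJ j k + QJ j k <= sumR n (fun j => PJ j k + QJ j k)).
    { apply (sumR_ge_term n (fun j => PJ j k + QJ j k) j Hj). intros j' Hj'.
      specialize (PPJ j' k Hk); specialize (PQJ j' k Hk); lra. }
    specialize (PPJ j k Hk). lra. }
  set (R0 := sumR n (fun j => Del j * (density g n psi j - density g n phi0 j))).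
  set (W := 2 * (sumR n (fun j => Rabs (Del j)) + Rabs cc)).
  assert (W0 : 0 <= W).
  { unfold W. assert (0 <= sumR n (fun j => Rabs (Del j))) by (apply sumR_nonneg; intros; apply Rabs_pos).
    assert (0 <= Rabs cc) by apply Rabs_pos. lra. }
  assert (Main : forall eps, 0 < eps -> lsum TT l0 <= R0 + eps * W).
  { intros eps He.
    destruct (tail_exists G eps PG SG He l0 N0 F0) as [L [NL [FL [IL HL]]]].
    assert (C_pp := comp_tail pp G L Ppp LeG_pp SG NL FL).
    assert (C_qq := comp_tail qq G L Pqq LeG_qq SG NL FL).
    assert (C_PJ : forall j, (j < n)%nat -> Rabs (lsum (PJ j) L - density g n psi j) <= eps).
    { intros j Hj. destruct (comp_tail (PJ j) G L (PPJ j) (LeG_PJ j Hj) SG NL FL). rewrite TPJ in *; auto.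
      rewrite Rabs_left1; lra. }
    assert (C_QJ : forall j, (j < n)%nat -> Rabs (lsum (QJ j) L - density g n phi0 j) <= eps).
    { intros j Hj. destruct (comp_tail (QJ j) G L (PQJ j) (LeG_QJ j Hj) SG NL FL). rewrite TQJ in *; auto.
      rewrite Rabs_left1; lra. }
    assert (I1 : lsum TT l0 <= lsum TT L).
    { apply lsum_incl_le; auto. intros; apply TT_nneg. }
    assert (E : lsum TT L = sumR n (fun j => Del j * (lsum (PJ j) L - lsum (QJ j) L)) - cc * (lsum pp L - lsum qq L)).
    { rewrite (lsum_ext TT (fun k => sumR n (fun j => Del j * (PJ j k - QJ j k)) - cc * (pp k - qq k)) L).
      - rewrite lsum_minus, lsum_scal, lsum_minus, lsum_sumR. f_equal. apply sumR_ext. intros j Hj.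
        rewrite lsum_scal, lsum_minus. auto.
      - intros k _. unfold TT, LL, PJ, QJ.
        assert (Hs : sumR n (fun j => Del j * (INR (k j) * pp k - INR (k j) * qq k)) = (pp k - qq k) * sumR n (fun j => INR (k j) * Del j)).
        { rewrite <- sumR_scal. apply sumR_ext; intros; ring. }
        rewrite Hs. ring. }
    rewrite E in I1.
    assert (B1 : Rabs (sumR n (fun j => Del j * (lsum (PJ j) L - lsum (QJ j) L)) - R0) <= eps * (2 * sumR n (fun j => Rabs (Del j)))).
    { unfold R0. rewrite <- sumR_minus. 
      assert (Gen : forall m, (m <= n)%nat -> Rabs (sumR m (fun j => Del j * (lsum (PJ j) L - lsum (QJ j) L) -
         Del j * (density g n psi j - density g n phi0 j))) <= eps * (2 * sumR m (fun j => Rabs (Del j)))).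
      { induction m; intros Hm. simpl. rewrite Rabs_R0; lra.
        simpl. eapply Rle_trans; [apply Rabs_triang|].
        assert (Rabs (Del m * (lsum (PJ m) L - lsum (QJ m) L) - Del m * (density g n psi m - density g n phi0 m))
           <= eps * (2 * Rabs (Del m))).
        { replace (Del m * (lsum (PJ m) L - lsum (QJ m) L) - Del m * (density g n psi m - density g n phi0 m)) with
            (Del m * ((lsum (PJ m) L - density g n psi m) - (lsum (QJ m) L - density g n phi0 m))) by ring.
          rewrite Rabs_mult.
          assert (Rabs ((lsum (PJ m) L - density g n psi m) - (lsum (QJ m) L - density g n phi0 m)) <= 2 * eps).
          { eapply Rle_trans; [apply Rabs_triang|]. rewrite Rabs_Ropp.
            assert (Rabs (lsum (PJ m) L - density g n psi m) <= eps) by (apply C_PJ; lia).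
            assert (Rabs (lsum (QJ m) L - density g n phi0 m) <= eps) by (apply C_QJ; lia). lra. }
          assert (0 <= Rabs (Del m)) by apply Rabs_pos.
          replace (eps * (2 * Rabs (Del m))) with (Rabs (Del m) * (2 * eps)) by ring.
          apply Rmult_le_compat_l; auto. }
        assert (IH := IHm ltac:(lia)). lra. }
      apply Gen; lia. }
    assert (B2 : Rabs (cc * (lsum pp L - lsum qq L)) <= eps * (2 * Rabs cc)).
    { rewrite Rabs_mult. replace (eps * (2 * Rabs cc)) with (Rabs cc * (2 * eps)) by ring.
      apply Rmult_le_compat_l; [apply Rabs_pos|]. rewrite Tpp in C_pp. rewrite Tqq in C_qq.
      apply Rabs_le. lra. }
    apply Rabs_le_inv_ in B1. apply Rabs_le_inv_ in B2. unfold W. lra. }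
  destruct (Rle_dec (lsum TT l0) R0) as [H|H]; auto. exfalso.
  destruct (Req_dec W 0) as [W00|W00].
  - specialize (Main 1 ltac:(lra)). rewrite W00 in Main. lra.
  - specialize (Main ((lsum TT l0 - R0) / (2 * W))). 
    assert (0 < (lsum TT l0 - R0) / (2 * W)) by (apply Rdiv_lt_0_compat; lra).
    specialize (Main H0). replace ((lsum TT l0 - R0) / (2 * W) * W) with ((lsum TT l0 - R0) / 2) in Main by (field; lra).
    lra.
Qed.

End KL.

Lemma sumR_le m f h : (forall j, (j < m)%nat -> f j <= h j) -> sumR m f <= sumR m h.
Proof. induction m; simpl; intros H; [lra|]. assert (f m <= h m) by (apply H; lia).
  assert (sumR m f <= sumR m h) by (apply IHm; intros; apply H; lia). lra. Qed.

Lemma sumR_const m c : sumR m (fun _ => c) = INR m * c.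
Proof. induction m. simpl; ring. rewrite S_INR. simpl. rewrite IHm. ring. Qed.

Lemma h_mono v t : 0 <= v <= t -> v ^ 2 / (1 + v) <= t ^ 2 / (1 + t).
Proof. intros H. apply Rmult_le_reg_r with ((1 + v) * (1 + t)). nra.
  replace (v ^ 2 / (1 + v) * ((1 + v) * (1 + t))) with (v^2 * (1 + t)) by (field; lra).
  replace (t ^ 2 / (1 + t) * ((1 + v) * (1 + t))) with (t^2 * (1 + v)) by (field; lra).
  simpl. assert (A1 : v * v <= t * t) by nra. assert (A2 : 0 <= v * t * (t - v)) by (apply Rmult_le_pos; nra). nra. Qed.

Lemma NoDup_l0 n : NoDup (zk :: map ek (seq 0 n)).
Proof.
  constructor.
  - intros H. apply in_map_iff in H. destruct H as [i [E _]].
    assert (ek i i = zk i) by (rewrite E; auto). rewrite ek_i in H. unfold zk in H. lia.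
  - apply NoDup_map_on; [|apply seq_NoDup]. intros x y _ _ E.
    assert (ek x x = ek y x) by (rewrite E; auto). rewrite ek_i in H.
    destruct (Nat.eq_dec x y); auto. rewrite ek_j in H; auto. lia.
Qed.

Lemma Forall_l0 n : Forall (cfg n) (zk :: map ek (seq 0 n)).
Proof. constructor. apply cfg_zk. apply Forall_forall. intros x Hx. apply in_map_iff in Hx.
  destruct Hx as [i [<- Hi]]. apply in_seq in Hi. apply cfg_ek; lia. Qed.

Section Cont.
Variable n : nat.
Variable g : nat -> (nat -> nat) -> R.
Hypothesis Hzr : zr_rates g n.
Variable phi0 : nat -> R.
Hypothesis Hd0 : in_fug_domain g n phi0.

Lemma cont_Phi : forall rho, 0 < rho -> exists sig, 0 < sig /\ forall psi, in_fug_domain g n psi ->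
  (forall j, (j < n)%nat -> Rabs (density g n psi j - density g n phi0 j) <= sig) ->
  forall j, (j < n)%nat -> Rabs (psi j / phi0 j - 1) <= rho.
Proof.
  intros rho Hrho.
  set (N := INR n + 1).
  assert (HN : 1 <= N) by (unfold N; assert (0 <= INR n) by apply pos_INR; lra).
  set (qmin := Rmin (qq n g phi0 zk) (minR n (fun i => qq n g phi0 (ek i)))).
  assert (Hq : 0 < qmin).
  { unfold qmin. apply Rmin_glb_lt. apply qq_pos; auto. apply minR_pos; intros; apply qq_pos; auto. }
  set (r' := Rmin (1/2) (rho/2)).
  assert (Hr' : 0 < r') by (unfold r'; apply Rmin_glb_lt; lra).
  set (sig := Rmin (qmin / (4 * N^2)) (qmin * r' / (2 * N^3))).
  assert (N2 : 0 < N^2) by (apply pow_lt; lra). assert (N3 : 0 < N^3) by (apply pow_lt; lra).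
  assert (Hsig : 0 < sig).
  { unfold sig. apply Rmin_glb_lt; apply Rdiv_lt_0_compat; try lra. apply Rmult_lt_0_compat; lra. }
  exists sig; split; auto.
  intros psi Hd1 Hclose.
  set (u0 := Rabs (cc n g phi0 psi)).
  set (u := fun i => Rabs (Del phi0 psi i - cc n g phi0 psi)).
  set (U := u0 + sumR n u).
  assert (Pu : forall i, 0 <= u i) by (intros; apply Rabs_pos).
  assert (Pu0 : 0 <= u0) by apply Rabs_pos.
  assert (PSu : 0 <= sumR n u) by (apply sumR_nonneg; auto).
  assert (HDel : forall i, Rabs (Del phi0 psi i) <= u i + u0).
  { intros i. unfold u, u0. replace (Del phi0 psi i) with ((Del phi0 psi i - cc n g phi0 psi) + cc n g phi0 psi) at 1 by ring.
    apply Rabs_triang. }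
  assert (HDelU : forall i, (i < n)%nat -> Rabs (Del phi0 psi i) <= U).
  { intros i Hi. assert (u i <= sumR n u) by (apply sumR_ge_term; auto). specialize (HDel i). unfold U. lra. }
  assert (K := key_ineq n g Hzr phi0 psi Hd0 Hd1 _ (NoDup_l0 n) (Forall_l0 n)).
  set (R0 := sumR n (fun j => Del phi0 psi j * (density g n psi j - density g n phi0 j))) in K.
  assert (HR0 : R0 <= sig * (N * U)).
  { unfold R0. apply Rle_trans with (sumR n (fun j => (u j + u0) * sig)).
    - apply sumR_le. intros j Hj. eapply Rle_trans; [apply Rle_abs|]. rewrite Rabs_mult.
      apply Rmult_le_compat; try apply Rabs_pos; auto.
    - rewrite (sumR_ext n _ (fun j => sig * u j + sig * u0)); [|intros; ring].
      rewrite sumR_plus, !sumR_scal.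
      assert (E : sumR n (fun _ => u0) = INR n * u0).
      { apply sumR_const. }
      rewrite E. unfold U, N. assert (0 <= INR n) by apply pos_INR.
      assert (INR n * u0 <= INR n * u0 + sumR n u * INR n + u0) by nra.
      nra. }
  change (lsum (TT n g phi0 psi) (zk :: map ek (seq 0 n))) with (TT n g phi0 psi zk + lsum (TT n g phi0 psi) (map ek (seq 0 n))) in K. rewrite lsum_map_ek in K.
  assert (Lz : LL n g phi0 psi zk = - cc n g phi0 psi) by (unfold LL; rewrite sumR_zk_mult; ring).
  assert (Le : forall i, (i < n)%nat -> LL n g phi0 psi (ek i) = Del phi0 psi i - cc n g phi0 psi).
  { intros i Hi. unfold LL. rewrite sumR_ek_mult; auto. }
  assert (PT : forall i, 0 <= TT n g phi0 psi (ek i)) by (intros; apply TT_nneg; auto).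
  assert (PTz : 0 <= TT n g phi0 psi zk) by (apply TT_nneg; auto).
  assert (PST : 0 <= sumR n (fun i => TT n g phi0 psi (ek i))) by (apply sumR_nonneg; auto).
  set (V := U / N).
  assert (HV0 : 0 <= V) by (unfold V, U; apply Rmult_le_pos; [lra|left; apply Rinv_0_lt_compat; lra]).
  assert (Low : qmin * (V ^ 2 / (1 + V)) <= TT n g phi0 psi zk + (sumR n (fun i => TT n g phi0 psi (ek i)) + 0)).
  { destruct (Rle_dec V u0) as [Hv|Hv].
    - eapply Rle_trans; [|assert (TT n g phi0 psi zk <= TT n g phi0 psi zk + (sumR n (fun i => TT n g phi0 psi (ek i)) + 0)) by lra; eauto].
      eapply Rle_trans; [|apply TT_lower; auto]. rewrite Lz. rewrite <- Rabs_Ropp, Ropp_involutive. fold u0.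
      rewrite <- (pow2_abs (- cc n g phi0 psi)), Rabs_Ropp. fold u0.
      apply Rmult_le_compat. lra. unfold Rdiv; apply Rmult_le_pos; [apply pow2_ge_0|left; apply Rinv_0_lt_compat; lra].
      unfold qmin; apply Rmin_l. apply h_mono; lra.
    - assert (INR n * V < sumR n u).
      { assert (U = N * V) by (unfold V; field; lra). unfold U in H. unfold N in H. lra. }
      destruct (pigeon n u V H) as [i [Hi Hui]].
      assert (TT n g phi0 psi (ek i) <= sumR n (fun i => TT n g phi0 psi (ek i))) by (apply (sumR_ge_term n (fun i => TT n g phi0 psi (ek i)) i Hi); auto).
      apply Rle_trans with (TT n g phi0 psi (ek i)); [|lra].
      eapply Rle_trans; [|apply TT_lower; auto]. rewrite (Le i Hi).
      rewrite <- (pow2_abs (Del phi0 psi i - cc n g phi0 psi)). fold (u i).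
      apply Rmult_le_compat. lra. unfold Rdiv; apply Rmult_le_pos; [apply pow2_ge_0|left; apply Rinv_0_lt_compat; lra].
      unfold qmin. eapply Rle_trans; [apply Rmin_r|apply (minR_le n (fun i => qq n g phi0 (ek i)) i Hi)]. apply h_mono; lra. }
  assert (Ineq : qmin * (V ^ 2 / (1 + V)) <= sig * N ^ 2 * V).
  { replace (sig * N^2 * V) with (sig * (N * U)) by (unfold V; field; lra). lra. }
  assert (s1 : sig * N^2 <= qmin / 4).
  { assert (sig <= qmin / (4 * N^2)) by apply Rmin_l.
    apply Rle_trans with (qmin / (4 * N^2) * N^2). apply Rmult_le_compat_r; lra. right; field; lra. }
  assert (HVb : V <= 2 * sig * N^2 / qmin).
  { destruct (Req_dec V 0) as [->|HV]. unfold Rdiv. apply Rmult_le_pos; [|left; apply Rinv_0_lt_compat; auto].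
    apply Rmult_le_pos; lra.
    assert (I2 : qmin * V <= sig * N^2 * (1 + V)).
    { apply Rmult_le_reg_r with (V / (1 + V)). apply Rdiv_lt_0_compat; lra.
      replace (qmin * V * (V / (1 + V))) with (qmin * (V^2 / (1+V))) by (field; lra).
      replace (sig * N ^ 2 * (1 + V) * (V / (1 + V))) with (sig * N^2 * V) by (field; lra). auto. }
    assert (V <= 1/3).
    { assert (qmin * V <= qmin / 4 * (1 + V)) by (eapply Rle_trans; [apply I2|apply Rmult_le_compat_r; lra]).
      nra. }
    apply Rmult_le_reg_r with qmin; auto. unfold Rdiv. rewrite Rmult_assoc, Rinv_l; [|lra].
    assert (sig * N^2 * (1 + V) <= sig * N^2 * (4/3)).
    { apply Rmult_le_compat_l; [apply Rmult_le_pos; lra|lra]. }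
    assert (0 <= sig * N^2) by (apply Rmult_le_pos; lra). nra. }
  intros j Hj.
  assert (HD : Rabs (Del phi0 psi j) <= r').
  { eapply Rle_trans; [apply HDelU; auto|].
    replace U with (N * V) by (unfold V; field; lra).
    assert (sig <= qmin * r' / (2 * N ^ 3)) by apply Rmin_r.
    apply Rle_trans with (N * (2 * sig * N ^ 2 / qmin)). apply Rmult_le_compat_l; lra.
    replace (N * (2 * sig * N ^ 2 / qmin)) with (sig * (2 * N^3) / qmin) by (field; lra).
    assert (sig * (2 * N^3) <= qmin * r') by (apply Rle_trans with (qmin * r' / (2 * N ^ 3) * (2 * N^3)); [apply Rmult_le_compat_r; lra | right; field; lra]).
    apply Rmult_le_reg_r with qmin; auto.
    replace (sig * (2 * N ^ 3) / qmin * qmin) with (sig * (2 * N^3)) by (field; lra). lra. }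
  assert (Hpj : 0 < psi j / phi0 j) by (apply Rdiv_lt_0_compat; [apply (dom_pos n g psi Hd1)|apply (dom_pos n g phi0 Hd0)]; auto).
  replace (psi j / phi0 j) with (exp (Del phi0 psi j)) by (unfold Del; apply exp_ln; auto).
  assert (r'1 : r' <= 1/2) by apply Rmin_l. assert (r'2 : r' <= rho/2) by apply Rmin_r.
  eapply Rle_trans; [apply exp_small; lra|]. lra.
Qed.

End Cont.

Lemma fin_delta m (Q : nat -> R -> Prop) :
  (forall i, (i < m)%nat -> exists d, 0 < d /\ forall h, h <> 0 -> Rabs h < d -> Q i h) ->
  exists d, 0 < d /\ forall h, h <> 0 -> Rabs h < d -> forall i, (i < m)%nat -> Q i h.
Proof.
  induction m; intros H.
  - exists 1; split; [lra|]. intros; lia.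
  - destruct IHm as [d1 [P1 H1]]. intros; apply H; lia.
    destruct (H m) as [d2 [P2 H2]]; [lia|].
    exists (Rmin d1 d2); split; [apply Rmin_glb_lt; auto|].
    intros h Hh Hd i Hi. assert (Rmin d1 d2 <= d1) by apply Rmin_l. assert (Rmin d1 d2 <= d2) by apply Rmin_r.
    destruct (Nat.eq_dec i m) as [->|Hne]; [apply H2; auto; lra|apply H1; auto; try lra; lia].
Qed.

Lemma sumR_indic m (f : nat -> R) j v : (j < m)%nat ->
  sumR m (fun x => f x * (if Nat.eqb x j then v else 0)) = f j * v.
Proof.
  induction m; intros Hj; [lia|]. simpl. destruct (Nat.eq_dec j m) as [->|Hne].
  - rewrite Nat.eqb_refl. replace (sumR m (fun x => f x * (if Nat.eqb x m then v else 0))) with 0. ring.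
    symmetry. assert (forall p, (p <= m)%nat -> sumR p (fun x => f x * (if Nat.eqb x m then v else 0)) = 0).
    { induction p; simpl; intros; auto. rewrite IHp; [|lia]. destruct (Nat.eqb_spec p m); [lia|ring]. }
    apply H; lia.
  - rewrite IHm; [|lia]. destruct (Nat.eqb_spec m j); [lia|ring].
Qed.

Lemma sumR_indic2 m (f : nat -> R) j : (j < m)%nat -> (forall x, (x < m)%nat -> x <> j -> f x = 0) ->
  sumR m f = f j.
Proof.
  intros Hj H. rewrite (sumR_ext m f (fun x => f x * (if Nat.eqb x j then 1 else 0))).
  rewrite sumR_indic; auto; ring.
  intros x Hx. destruct (Nat.eqb_spec x j); [ring|rewrite H; auto; ring].
Qed.

Lemma sumR_prod_bound m (a b : nat -> R) B : (forall x, (x < m)%nat -> Rabs (b x) <= B) ->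
  Rabs (sumR m (fun x => a x * b x)) <= sumR m (fun x => Rabs (a x)) * B.
Proof.
  induction m; intros H; simpl. rewrite Rabs_R0; lra.
  eapply Rle_trans; [apply Rabs_triang|]. rewrite Rabs_mult.
  assert (Rabs (sumR m (fun x => a x * b x)) <= sumR m (fun x => Rabs (a x)) * B) by (apply IHm; intros; apply H; lia).
  assert (Rabs (a m) * Rabs (b m) <= Rabs (a m) * B) by (apply Rmult_le_compat_l; [apply Rabs_pos|apply H; lia]).
  lra.
Qed.

Lemma upd_self (a : nat -> R) j : upd a j (a j) = a.
Proof. apply functional_extensionality; intros i. unfold upd. destruct (Nat.eqb_spec i j); subst; auto. Qed.

Lemma upd_diff (a : nat -> R) j t i : upd a j t i - a i = if Nat.eqb i j then t - a j else 0.
Proof. unfold upd. destruct (Nat.eqb_spec i j); subst; auto; ring. Qed.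

Lemma eq_by_eps x y : (forall e, 0 < e -> Rabs (x - y) <= e) -> x = y.
Proof. intros H. destruct (Req_dec x y); auto. exfalso.
  assert (0 < Rabs (x - y)) by (apply Rabs_pos_lt; lra).
  specialize (H (Rabs (x - y) / 2) ltac:(lra)). lra. Qed.

Section Main.
Variable n : nat.
Variable g : nat -> (nat -> nat) -> R.
Hypothesis Hzr : zr_rates g n.
Variable Phi : (nat -> R) -> (nat -> R).
Variable a0 : nat -> R.
Variable eps0 : R.
Hypothesis Heps0 : 0 < eps0.
Hypothesis HPhi : forall a : nat -> R, (forall i, (i < n)%nat -> Rabs (a i - a0 i) < eps0) ->
    in_fug_domain g n (Phi a) /\ forall i, (i < n)%nat -> density g n (Phi a) i = a i.

Lemma near j h : Rabs h < eps0 ->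
  in_fug_domain g n (Phi (upd a0 j (a0 j + h))) /\
  forall i, (i < n)%nat -> density g n (Phi (upd a0 j (a0 j + h))) i = a0 i + (if Nat.eqb i j then h else 0).
Proof.
  intros Hh. destruct (HPhi (upd a0 j (a0 j + h))) as [D E].
  { intros i Hi. rewrite upd_diff. destruct (Nat.eqb i j). replace (a0 j + h - a0 j) with h by ring; auto.
    rewrite Rabs_R0; auto. }
  split; auto. intros i Hi. rewrite E; auto. unfold upd. destruct (Nat.eqb_spec i j); subst; ring.
Qed.

Lemma dom0 : in_fug_domain g n (Phi a0) /\ forall i, (i < n)%nat -> density g n (Phi a0) i = a0 i.
Proof. apply HPhi. intros i Hi. rewrite Rminus_diag, Rabs_R0; auto. Qed.

Let phi0 := Phi a0.

Lemma chainA j c : (j < n)%nat ->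
  (forall m, (m < n)%nat -> derivable_pt_lim (fun t => Phi (upd a0 j t) m) (a0 j) (c m)) ->
  forall i, (i < n)%nat -> sumR n (fun m => Gam0 n g phi0 i m * (c m / phi0 m)) = if Nat.eqb i j then 1 else 0.
Proof.
  intros Hj Hder i Hi.
  destruct dom0 as [Hd0 Hden0].
  assert (Hp := dom_pos n g phi0 Hd0).
  destruct (dens_exp n g Hzr phi0 Hd0) as [K [d1 [Hd1 [HK Hexp]]]].
  set (pmin := minR n phi0).
  assert (Hpm : 0 < pmin) by (apply minR_pos; auto).
  set (Gs := sumR n (fun m => Rabs (Gam0 n g phi0 i m))).
  assert (HGs : 0 <= Gs) by (apply sumR_nonneg; intros; apply Rabs_pos).
  set (Cb := sumR n (fun m => Rabs (c m / phi0 m)) + 1).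
  assert (HCb0 : 0 <= sumR n (fun m => Rabs (c m / phi0 m))) by (apply sumR_nonneg; intros; apply Rabs_pos).
  assert (HCb : 1 <= Cb) by (unfold Cb; lra).
  symmetry. apply eq_by_eps. intros e He.
  set (e' := Rmin 1 (e / (2 * (Gs + 1)))).
  assert (He' : 0 < e') by (unfold e'; apply Rmin_glb_lt; [lra|apply Rdiv_lt_0_compat; lra]).
  assert (He'1 : e' <= 1) by apply Rmin_l.
  assert (He'2 : e' <= e / (2 * (Gs + 1))) by apply Rmin_r.
  destruct (fin_delta n (fun m h => Rabs ((Phi (upd a0 j (a0 j + h)) m - phi0 m) / h - c m) < e' * pmin)) as [dl [Hdl Hdlp]].
  { intros m Hm. destruct (Hder m Hm (e' * pmin) ltac:(apply Rmult_lt_0_compat; lra)) as [[dd Hdd] Hdd'].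
    exists dd; split; auto. intros h Hh Hhd. specialize (Hdd' h Hh Hhd). simpl in Hdd'.
    rewrite upd_self in Hdd'. exact Hdd'. }
  set (h := Rmin (Rmin dl eps0) (Rmin (d1 / Cb) (e / (2 * (K * Cb ^ 2 + 1)))) / 2).
  assert (Hm1 : 0 < Rmin (Rmin dl eps0) (Rmin (d1 / Cb) (e / (2 * (K * Cb ^ 2 + 1))))).
  { apply Rmin_glb_lt; apply Rmin_glb_lt; try lra; apply Rdiv_lt_0_compat; try lra.
    assert (0 <= K * Cb^2) by (apply Rmult_le_pos; [lra|apply pow_le; lra]). lra. }
  assert (Hh0 : 0 < h) by (unfold h; lra).
  assert (Hhl : h < dl).
  { unfold h. assert (Rmin (Rmin dl eps0) (Rmin (d1 / Cb) (e / (2 * (K * Cb ^ 2 + 1)))) <= dl).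
    { eapply Rle_trans; [apply Rmin_l|apply Rmin_l]. } lra. }
  assert (Hhe : h < eps0).
  { unfold h. assert (Rmin (Rmin dl eps0) (Rmin (d1 / Cb) (e / (2 * (K * Cb ^ 2 + 1)))) <= eps0).
    { eapply Rle_trans; [apply Rmin_l|apply Rmin_r]. } lra. }
  assert (Hhd : h <= d1 / Cb).
  { unfold h. assert (Rmin (Rmin dl eps0) (Rmin (d1 / Cb) (e / (2 * (K * Cb ^ 2 + 1)))) <= d1 / Cb).
    { eapply Rle_trans; [apply Rmin_r|apply Rmin_l]. } assert (0 < d1 / Cb) by (apply Rdiv_lt_0_compat; lra). lra. }
  assert (Hhk : h <= e / (2 * (K * Cb ^ 2 + 1))).
  { unfold h. assert (Rmin (Rmin dl eps0) (Rmin (d1 / Cb) (e / (2 * (K * Cb ^ 2 + 1)))) <= e / (2 * (K * Cb ^ 2 + 1))).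
    { eapply Rle_trans; [apply Rmin_r|apply Rmin_r]. }
    assert (0 < e / (2 * (K * Cb ^ 2 + 1))). apply Rdiv_lt_0_compat; [lra|].
    assert (0 <= K * Cb^2) by (apply Rmult_le_pos; [lra|apply pow_le; lra]). lra. lra. }
  assert (Habs : Rabs h = h) by (apply Rabs_right; lra).
  assert (Hhn0 : h <> 0) by lra.
  set (psi := Phi (upd a0 j (a0 j + h))).
  destruct (near j h ltac:(lra)) as [Hdpsi Hdens].
  set (de := fun m => psi m / phi0 m - 1).
  assert (Hq : forall m, (m < n)%nat -> Rabs (de m / h - c m / phi0 m) < e').
  { intros m Hm. specialize (Hdlp h Hhn0 ltac:(lra) m Hm). simpl in Hdlp. fold psi in Hdlp.
    assert (0 < phi0 m) by auto.
    replace (de m / h - c m / phi0 m) with (((psi m - phi0 m) / h - c m) / phi0 m) by (unfold de; field; lra).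
    unfold Rdiv at 1. rewrite Rabs_mult, Rabs_inv, (Rabs_right (phi0 m)); [|lra].
    apply Rmult_lt_reg_r with (phi0 m); auto. rewrite Rmult_assoc, Rinv_l; [|lra].
    assert (pmin <= phi0 m) by (apply minR_le; auto).
    assert (e' * pmin <= e' * phi0 m) by (apply Rmult_le_compat_l; lra). lra. }
  assert (Hde : forall m, (m < n)%nat -> Rabs (de m) <= Cb * h).
  { intros m Hm. specialize (Hq m Hm).
    assert (Rabs (c m / phi0 m) <= sumR n (fun m => Rabs (c m / phi0 m))).
    { apply (sumR_ge_term n (fun m => Rabs (c m / phi0 m)) m Hm). intros; apply Rabs_pos. }
    assert (Rabs (de m / h) <= Cb).
    { replace (de m / h) with ((de m / h - c m / phi0 m) + c m / phi0 m) by ring.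
      eapply Rle_trans; [apply Rabs_triang|]. unfold Cb. lra. }
    replace (de m) with ((de m / h) * h) by (field; lra). rewrite Rabs_mult, Habs.
    apply Rmult_le_compat_r; lra. }
  assert (Hpsi : forall m, (m < n)%nat -> psi m = phi0 m * (1 + de m)).
  { intros m Hm. unfold de. assert (0 < phi0 m) by auto. field. lra. }
  assert (Hdd : 0 <= Cb * h <= d1).
  { split. apply Rmult_le_pos; lra.
    apply Rle_trans with (Cb * (d1 / Cb)). apply Rmult_le_compat_l; lra. right; field; lra. }
  destruct (Hexp psi de (Cb * h) Hpsi Hde Hdd) as [_ Hb].
  specialize (Hb i Hi). rewrite Hdens, Hden0 in Hb; auto.
  replace (a0 i + (if Nat.eqb i j then h else 0) - a0 i) with ((if Nat.eqb i j then 1 else 0) * h) in Hb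
    by (destruct (Nat.eqb i j); ring).
  set (X := if Nat.eqb i j then 1 else 0) in *.
  replace (X - sumR n (fun m => Gam0 n g phi0 i m * (c m / phi0 m))) with
    ((X * h - sumR n (fun m => Gam0 n g phi0 i m * de m)) / h
     + sumR n (fun m => Gam0 n g phi0 i m * (de m / h - c m / phi0 m))).
  2:{ rewrite (sumR_ext n (fun m => Gam0 n g phi0 i m * (de m / h - c m / phi0 m))
        (fun m => / h * (Gam0 n g phi0 i m * de m) - Gam0 n g phi0 i m * (c m / phi0 m))).
      rewrite sumR_minus, sumR_scal. field. lra.
      intros m Hm. unfold Rdiv; ring. }
  eapply Rle_trans; [apply Rabs_triang|].
  assert (T1 : Rabs ((X * h - sumR n (fun m => Gam0 n g phi0 i m * de m)) / h) <= e / 2).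
  { unfold Rdiv. rewrite Rabs_mult, Rabs_inv, Habs.
    apply Rle_trans with (K * (Cb * h) ^ 2 * / h). apply Rmult_le_compat_r; [left; apply Rinv_0_lt_compat; lra|auto].
    replace (K * (Cb * h) ^ 2 * / h) with ((K * Cb^2) * h) by (field; lra).
    assert (0 <= K * Cb^2) by (apply Rmult_le_pos; [lra|apply pow_le; lra]).
    apply Rle_trans with ((K * Cb^2) * (e / (2 * (K * Cb ^ 2 + 1)))). apply Rmult_le_compat_l; lra.
    apply Rmult_le_reg_r with (2 * (K * Cb^2 + 1)); [lra|].
    replace (K * Cb ^ 2 * (e / (2 * (K * Cb ^ 2 + 1))) * (2 * (K * Cb ^ 2 + 1))) with (K * Cb^2 * e) by (field; lra).
    nra. }
  assert (T2 : Rabs (sumR n (fun m => Gam0 n g phi0 i m * (de m / h - c m / phi0 m))) <= e / 2).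
  { eapply Rle_trans; [apply (sumR_prod_bound n _ _ e')|].
    intros m Hm; left; apply Hq; auto. fold Gs.
    apply Rle_trans with (Gs * (e / (2 * (Gs + 1)))). apply Rmult_le_compat_l; lra.
    apply Rmult_le_reg_r with (2 * (Gs + 1)); [lra|].
    replace (Gs * (e / (2 * (Gs + 1))) * (2 * (Gs + 1))) with (Gs * e) by (field; lra). nra. }
  lra.
Qed.

Lemma chainB c : 0 < c ->
  (forall i j, (i < n)%nat -> (j < n)%nat -> i <> j -> Gam0 n g phi0 i j = 0) ->
  (forall i, (i < n)%nat -> Gam0 n g phi0 i i = phi0 i / c) ->
  forall i j, (i < n)%nat -> (j < n)%nat ->
  derivable_pt_lim (fun t => Phi (upd a0 j t) i) (a0 j) (if Nat.eqb i j then c else 0).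
Proof.
  intros Hc Hoff Hdiag i j Hi Hj e He.
  destruct dom0 as [Hd0 Hden0].
  assert (Hp := dom_pos n g phi0 Hd0).
  destruct (dens_exp n g Hzr phi0 Hd0) as [K [d1 [Hd1 [HK Hexp]]]].
  set (pmin := minR n phi0).
  assert (Hpm : 0 < pmin) by (apply minR_pos; auto).
  assert (Hn0 : 0 <= INR n) by apply pos_INR.
  set (N := INR n + 1).
  set (r0 := Rmin d1 (pmin / (2 * INR n * c * K + 1))).
  assert (HncK : 0 <= 2 * INR n * c * K) by (repeat apply Rmult_le_pos; lra).
  assert (Hr0 : 0 < r0) by (unfold r0; apply Rmin_glb_lt; [lra|apply Rdiv_lt_0_compat; lra]).
  assert (Hr0a : r0 <= d1) by apply Rmin_l.
  assert (Hr0b : r0 <= pmin / (2 * INR n * c * K + 1)) by apply Rmin_r.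
  destruct (cont_Phi n g Hzr phi0 Hd0 (r0 / N) ltac:(unfold N; apply Rdiv_lt_0_compat; lra)) as [sig [Hsig Hcont]].
  set (B := 2 * INR n * c / pmin).
  assert (HB : 0 <= B) by (unfold B; unfold Rdiv; apply Rmult_le_pos; [apply Rmult_le_pos; [apply Rmult_le_pos|]; lra|left; apply Rinv_0_lt_compat; lra]).
  assert (HcKB : 0 <= c * K * B ^ 2) by (apply Rmult_le_pos; [apply Rmult_le_pos; lra|apply pow_le; lra]).
  set (dl := Rmin (Rmin sig eps0) (e / (c * K * B ^ 2 + 1))).
  assert (Hdl : 0 < dl) by (unfold dl; apply Rmin_glb_lt; [apply Rmin_glb_lt; lra|apply Rdiv_lt_0_compat; lra]).
  exists (mkposreal dl Hdl). intros h Hh Hhd. simpl in Hhd.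
  assert (Hh1 : Rabs h < sig) by (assert (dl <= sig) by (eapply Rle_trans; [apply Rmin_l|apply Rmin_l]); lra).
  assert (Hh2 : Rabs h < eps0) by (assert (dl <= eps0) by (eapply Rle_trans; [apply Rmin_l|apply Rmin_r]); lra).
  assert (Hh3 : Rabs h < e / (c * K * B ^ 2 + 1)) by (assert (dl <= e / (c * K * B ^ 2 + 1)) by apply Rmin_r; lra).
  assert (Hah : 0 < Rabs h) by (apply Rabs_pos_lt; auto).
  rewrite upd_self. fold phi0.
  set (psi := Phi (upd a0 j (a0 j + h))).
  destruct (near j h Hh2) as [Hdpsi Hdens]. fold psi in Hdpsi, Hdens.
  assert (Hc1 : forall m, (m < n)%nat -> Rabs (psi m / phi0 m - 1) <= r0 / N).
  { apply Hcont; auto. intros m Hm. rewrite Hdens, Hden0; auto.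
    replace (a0 m + (if Nat.eqb m j then h else 0) - a0 m) with (if Nat.eqb m j then h else 0) by ring.
    destruct (Nat.eqb m j); [lra|rewrite Rabs_R0; lra]. }
  set (de := fun m => psi m / phi0 m - 1).
  set (D := sumR n (fun m => Rabs (de m))).
  assert (HD0 : 0 <= D) by (apply sumR_nonneg; intros; apply Rabs_pos).
  assert (HDr : D <= r0).
  { apply Rle_trans with (INR n * (r0 / N)).
    - unfold D. rewrite <- sumR_const. apply sumR_le. intros m Hm. apply Hc1; auto.
    - unfold N. apply Rmult_le_reg_r with (INR n + 1); [lra|].
      replace (INR n * (r0 / (INR n + 1)) * (INR n + 1)) with (INR n * r0) by (field; lra). nra. }
  assert (Hdem : forall m, (m < n)%nat -> Rabs (de m) <= D).
  { intros m Hm. apply (sumR_ge_term n (fun m => Rabs (de m)) m Hm). intros; apply Rabs_pos. }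
  assert (Hpsi : forall m, (m < n)%nat -> psi m = phi0 m * (1 + de m)).
  { intros m Hm. unfold de. assert (0 < phi0 m) by auto. field. lra. }
  destruct (Hexp psi de D Hpsi Hdem (conj HD0 (Rle_trans _ _ _ HDr Hr0a))) as [_ Hb].
  assert (Main : forall i', (i' < n)%nat -> Rabs (psi i' - phi0 i' - c * (if Nat.eqb i' j then h else 0)) <= c * K * D ^ 2).
  { intros i' Hi'. specialize (Hb i' Hi'). rewrite Hdens, Hden0 in Hb; auto.
    rewrite (sumR_indic2 n (fun m => Gam0 n g phi0 i' m * de m) i' Hi') in Hb.
    2:{ intros x Hx Hne. rewrite Hoff; auto. ring. }
    rewrite Hdiag in Hb; auto.
    assert (0 < phi0 i') by auto.
    replace (psi i' - phi0 i' - c * (if Nat.eqb i' j then h else 0)) with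
      (- c * (a0 i' + (if Nat.eqb i' j then h else 0) - a0 i' - phi0 i' / c * de i')) by (unfold de; field; lra).
    rewrite Rabs_mult, Rabs_Ropp, (Rabs_right c); [|lra]. rewrite Rmult_assoc. apply Rmult_le_compat_l; lra. }
  assert (HD2 : D <= INR n * ((c * Rabs h + c * K * D ^ 2) / pmin)).
  { unfold D. rewrite <- sumR_const. apply sumR_le. intros m Hm.
    specialize (Main m Hm). assert (0 < phi0 m) by auto. assert (pmin <= phi0 m) by (apply minR_le; auto).
    unfold de. replace (psi m / phi0 m - 1) with ((psi m - phi0 m) / phi0 m) by (field; lra).
    unfold Rdiv. rewrite Rabs_mult, Rabs_inv, (Rabs_right (phi0 m)); [|lra].
    assert (Rabs (psi m - phi0 m) <= c * Rabs h + c * K * D ^ 2).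
    { replace (psi m - phi0 m) with ((psi m - phi0 m - c * (if Nat.eqb m j then h else 0)) + c * (if Nat.eqb m j then h else 0)) by ring.
      eapply Rle_trans; [apply Rabs_triang|]. rewrite Rabs_mult, (Rabs_right c); [|lra].
      assert (Rabs (if Nat.eqb m j then h else 0) <= Rabs h) by (destruct (Nat.eqb m j); [lra|rewrite Rabs_R0; apply Rabs_pos]).
      assert (c * Rabs (if Nat.eqb m j then h else 0) <= c * Rabs h) by (apply Rmult_le_compat_l; lra). lra. }
    apply Rmult_le_compat. apply Rabs_pos. left; apply Rinv_0_lt_compat; lra. auto.
    apply Rinv_le_contravar; auto. }
  assert (HDB : D <= B * Rabs h).
  { assert (Q1 : 2 * INR n * c * K * D <= pmin).
    { apply Rle_trans with ((2 * INR n * c * K + 1) * D). nra.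
      apply Rle_trans with ((2 * INR n * c * K + 1) * (pmin / (2 * INR n * c * K + 1))).
      apply Rmult_le_compat_l; lra. right; field; lra. }
    assert (Q2 : INR n * (c * K * D ^ 2) / pmin <= D / 2).
    { apply Rmult_le_reg_r with (2 * pmin); [lra|].
      replace (INR n * (c * K * D ^ 2) / pmin * (2 * pmin)) with ((2 * INR n * c * K * D) * D) by (field; lra).
      replace (D / 2 * (2 * pmin)) with (pmin * D) by field. apply Rmult_le_compat_r; lra. }
    replace (INR n * ((c * Rabs h + c * K * D ^ 2) / pmin)) with (INR n * c * Rabs h / pmin + INR n * (c * K * D ^ 2) / pmin) in HD2 by (field; lra).
    unfold B. replace (2 * INR n * c / pmin * Rabs h) with (2 * (INR n * c * Rabs h / pmin)) by (field; lra). lra. }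
  specialize (Main i Hi).
  replace ((psi i - phi0 i) / h - (if Nat.eqb i j then c else 0)) with
    ((psi i - phi0 i - c * (if Nat.eqb i j then h else 0)) / h) by (destruct (Nat.eqb i j); field; auto).
  unfold Rdiv. rewrite Rabs_mult, Rabs_inv.
  apply Rle_lt_trans with (c * K * D ^ 2 * / Rabs h). apply Rmult_le_compat_r; [left; apply Rinv_0_lt_compat; auto|auto].
  apply Rle_lt_trans with (c * K * (B * Rabs h) ^ 2 * / Rabs h).
  { apply Rmult_le_compat_r; [left; apply Rinv_0_lt_compat; auto|]. apply Rmult_le_compat_l; [apply Rmult_le_pos; lra|].
    apply pow_incr; lra. }
  replace (c * K * (B * Rabs h) ^ 2 * / Rabs h) with (c * K * B^2 * Rabs h) by (field; lra).
  apply Rle_lt_trans with (c * K * B^2 * (e / (c * K * B ^ 2 + 1))). apply Rmult_le_compat_l; lra.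
  apply Rmult_lt_reg_r with (c * K * B ^ 2 + 1); [lra|].
  replace (c * K * B ^ 2 * (e / (c * K * B ^ 2 + 1)) * (c * K * B ^ 2 + 1)) with (c * K * B^2 * e) by (field; lra).
  nra.
Qed.

End Main.

Theorem proposition4p2 (n : nat) (g : nat -> (nat -> nat) -> R)
  (Phi : (nat -> R) -> (nat -> R)) (a0 : nat -> R) :
  (1 <= n)%nat -> zr_rates g n -> INV g n ->
  (forall i, (i < n)%nat -> 0 < a0 i) ->
  fugacity_map_near g n Phi a0 ->
  (FC g n Phi a0 <->
     ((forall i j, (i < n)%nat -> (j < n)%nat -> i <> j -> Gamma g n Phi i j a0 = 0) /\
      (forall i j, (i < n)%nat -> (j < n)%nat ->
         gtilde g n Phi i a0 / Gamma g n Phi i i a0 = gtilde g n Phi j a0 / Gamma g n Phi j j a0)))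
  /\ (forall lam, FC_with g n Phi a0 lam ->
        forall i, (i < n)%nat -> gtilde g n Phi i a0 / Gamma g n Phi i i a0 = lam).
Proof.
  intros Hn Hzr Hinv Hpos [eps0 [Heps0 HPhi]].
  destruct (dom0 n g Phi a0 eps0 Heps0 HPhi) as [Hd0 Hden0].
  set (phi0 := Phi a0) in *.
  assert (Hp := dom_pos n g phi0 Hd0).
  assert (Hgt : forall i, (i < n)%nat -> gtilde g n Phi i a0 = phi0 i).
  { intros i Hi. unfold gtilde. apply expect_g; auto. apply dom_summable; auto. }
  assert (HGam : forall i j, Gamma g n Phi i j a0 = Gam0 n g phi0 i j) by reflexivity.
  assert (HGpos : forall i, (i < n)%nat -> 0 < Gam0 n g phi0 i i) by (intros; apply Gam0_pos; auto).
  assert (Hloc : forall m j, (m < n)%nat -> forall t, a0 j - eps0 < t < a0 j + eps0 ->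
     gtilde g n Phi m (upd a0 j t) = Phi (upd a0 j t) m).
  { intros m j Hm t Ht. destruct (near n g Phi a0 eps0 Heps0 HPhi j (t - a0 j)) as [Hd _].
    apply Rabs_def1; lra. replace (a0 j + (t - a0 j)) with t in Hd by ring.
    unfold gtilde. apply (expect_g n g Hzr Hinv _ m Hm (dom_pos n g _ Hd) (dom_summable n g _ Hd)). }
  assert (Hint : forall j, a0 j - eps0 < a0 j < a0 j + eps0) by (intros; lra).
  assert (KeyA : forall lam, FC_with g n Phi a0 lam -> forall i j, (i < n)%nat -> (j < n)%nat ->
     Gam0 n g phi0 i j * (lam / phi0 j) = if Nat.eqb i j then 1 else 0).
  { intros lam Hlam i j Hi Hj.
    assert (D : forall m, (m < n)%nat -> derivable_pt_lim (fun t => Phi (upd a0 j t) m) (a0 j) (if Nat.eqb m j then lam else 0)).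
    { intros m Hm. apply derivable_pt_lim_locally_ext with (f := fun t => gtilde g n Phi m (upd a0 j t)) (a := a0 j - eps0) (b := a0 j + eps0); auto.
      }
    assert (C := chainA n g Hzr Phi a0 eps0 Heps0 HPhi j _ Hj D i Hi). fold phi0 in C.
    rewrite (sumR_indic2 n _ j Hj) in C. rewrite Nat.eqb_refl in C. auto.
    intros x Hx Hne. destruct (Nat.eqb_spec x j); [lia|]. unfold Rdiv; ring. }
  assert (KeyA2 : forall lam, FC_with g n Phi a0 lam -> forall i, (i < n)%nat -> Gam0 n g phi0 i i * lam = phi0 i).
  { intros lam Hlam i Hi. assert (E := KeyA lam Hlam i i Hi Hi). rewrite Nat.eqb_refl in E.
    assert (0 < phi0 i) by auto.
    replace (Gam0 n g phi0 i i * (lam / phi0 i)) with (Gam0 n g phi0 i i * lam / phi0 i) in E by (field; lra).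
    apply Rmult_eq_compat_r with (r := phi0 i) in E. field_simplify in E; lra. }
  assert (Part2 : forall lam, FC_with g n Phi a0 lam ->
        forall i, (i < n)%nat -> gtilde g n Phi i a0 / Gamma g n Phi i i a0 = lam).
  { intros lam Hlam i Hi. rewrite Hgt, HGam; auto. rewrite <- (KeyA2 lam Hlam i Hi).
    assert (0 < Gam0 n g phi0 i i) by auto. field. lra. }
  split; auto. split.
  - intros [lam Hlam]. split.
    + intros i j Hi Hj Hne. rewrite HGam.
      assert (E := KeyA lam Hlam i j Hi Hj). destruct (Nat.eqb_spec i j); [lia|].
      assert (Hl : lam <> 0).
      { intros ->. assert (E2 := KeyA2 0 Hlam j Hj). assert (0 < phi0 j) by auto. lra. }
      assert (0 < phi0 j) by auto.
      apply Rmult_integral in E. destruct E as [E|E]; auto.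
      exfalso. unfold Rdiv in E. apply Rmult_integral in E. destruct E as [E|E]; [auto|].
      assert (/ phi0 j <> 0) by (apply Rinv_neq_0_compat; lra). auto.
    + intros i j Hi Hj. rewrite (Part2 lam Hlam i Hi), (Part2 lam Hlam j Hj). auto.
  - intros [Hoff Hrat].
    assert (H0n : (0 < n)%nat) by lia.
    set (c := phi0 0%nat / Gam0 n g phi0 0%nat 0%nat).
    assert (Hc : 0 < c) by (apply Rdiv_lt_0_compat; auto).
    assert (Hdiag : forall i, (i < n)%nat -> Gam0 n g phi0 i i = phi0 i / c).
    { intros i Hi. specialize (Hrat i 0%nat Hi H0n). rewrite !Hgt, !HGam in Hrat; auto. fold c in Hrat.
      assert (0 < Gam0 n g phi0 i i) by auto. assert (0 < phi0 i) by auto.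
      rewrite <- Hrat. field. split; lra. }
    exists c. intros i j Hi Hj.
    assert (D := chainB n g Hzr Phi a0 eps0 Heps0 HPhi c Hc).
    fold phi0 in D.
    assert (D' := D (fun i j Hi Hj Hne => eq_trans (eq_sym (HGam i j)) (Hoff i j Hi Hj Hne)) Hdiag i j Hi Hj).
    apply derivable_pt_lim_locally_ext with (f := fun t => Phi (upd a0 j t) i) (a := a0 j - eps0) (b := a0 j + eps0); auto.
    intros z Hz. symmetry. apply Hloc; auto.
Qed.
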